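(* Let $A$, $P$, $L$ be as in the context, let $A_{|(1-P)\mathfrak H}$ be the closure of $(1-P)A(1-P)$ on $LD(L)$, and assume $d:=\sup\sigma(A_{|(1-P)\mathfrak H})<\infty$. (i) Let $m_2''=\inf_{x\in D(L)\setminus\{0\}}\mu_2(x)$ and assume $m_2''>d$. Then $\mathrm{Spu}(A,P,L)\cap(d,m_2'')=\emptyset$. (ii) Let $m_2'=\inf\liminf_{n\to\infty}\mu_2(x_n)$, the infimum being over all sequences $\{x_n\}\subset D(L)\setminus\{0\}$ with $\|x_n\|=1$ and $x_n\rightharpoonup0$ weakly, and assume $m_2'>d$. Assume moreover that for some real $b>d$ (or $b=+\infty$) the following holds: whenever $\{x_n\}\subset D(L)$, $x_n\to0$ strongly and $\limsup_n\mu_2(x_n)<b$, then $\langle Ax_n,x_n\rangle\to0$. Then $\mathrm{Spu}(A,P,L)\cap\big(d,\min(m_2',b)\big)=\emptyset$.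
   Context: $A$ is a self-adjoint operator on a separable Hilbert space $\mathfrak H$ with dense domain $D(A)$ (graph norm $\|x\|^2+\|Ax\|^2$), $P$ an orthogonal projector on $\mathfrak H$, and $L:D(L)\subset P\mathfrak H\to(1-P)\mathfrak H$ an injective linear operator such that $D(L)\oplus LD(L)\subset D(A)$ is a core for $A$. It is assumed that $PAP$ is essentially self-adjoint on $D(L)$ and $(1-P)A(1-P)$ is essentially self-adjoint on $LD(L)$. For a finite-dimensional $V\subset D(A)$, $A_{|V}$ is the restriction of $P_VAP_V$ to $V$. For $0\ne x\in D(L)$, $\mu_1(x)\le\mu_2(x)$ are the two eigenvalues of $A_{|\mathrm{span}\{x,Lx\}}$ (the $2\times2$ matrix of $A$ on $x\mathbb C\oplus Lx\,\mathbb C$). $\lambda\in\mathbb R$ is a $(P,L)$-spurious eigenvalue, $\lambda\in\mathrm{Spu}(A,P,L)$, if there exist finite-dimensional subspaces $V_n^+\subset D(L)$, $V_n^+\subset V_{n+1}^+$, such that $\bigcup_n(V_n^+\oplus LV_n^+)$ is dense in $D(A)$ for the graph norm, $\lim_n\mathrm{dist}(\lambda,\sigma(A_{|V_n^+\oplus LV_n^+}))=0$, and $\lambda\notin\sigma(A)$. *)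

(* Defs.v *)
From Stdlib Require Import Reals List.
Open Scope R_scope.

Record C := mkC { Cre : R; Cim : R }.
Definition RC (r : R) : C := mkC r 0.
Definition Cplus (a b : C) : C := mkC (Cre a + Cre b) (Cim a + Cim b).
Definition Cmult (a b : C) : C :=
  mkC (Cre a * Cre b - Cim a * Cim b) (Cre a * Cim b + Cim a * Cre b).
Definition Cconj (a : C) : C := mkC (Cre a) (- Cim a).
Definition Cmod (a : C) : R := sqrt (Cre a ^ 2 + Cim a ^ 2).

(* distance built from the raw operations (used inside the record) *)
Definition raw_dist {T : Type} (add : T -> T -> T) (scal : C -> T -> T)
  (ip : T -> T -> C) (x y : T) : R :=
  sqrt (Cre (ip (add x (scal (RC (-1)) y)) (add x (scal (RC (-1)) y)))).

(* inner product linear in the first argument, antilinear in the second *)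
Record Hilbert := {
  hs :> Type;
  hzero : hs;
  hadd : hs -> hs -> hs;
  hscal : C -> hs -> hs;
  hip : hs -> hs -> C;
  hadd_assoc : forall x y z, hadd x (hadd y z) = hadd (hadd x y) z;
  hadd_comm : forall x y, hadd x y = hadd y x;
  hadd_0 : forall x, hadd x hzero = x;
  hadd_opp : forall x, hadd x (hscal (RC (-1)) x) = hzero;
  hscal_1 : forall x, hscal (RC 1) x = x;
  hscal_assoc : forall a b x, hscal a (hscal b x) = hscal (Cmult a b) x;
  hscal_distr_l : forall a x y, hscal a (hadd x y) = hadd (hscal a x) (hscal a y);
  hscal_distr_r : forall a b x, hscal (Cplus a b) x = hadd (hscal a x) (hscal b x);
  hip_add_l : forall x y z, hip (hadd x y) z = Cplus (hip x z) (hip y z);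
  hip_scal_l : forall a x y, hip (hscal a x) y = Cmult a (hip x y);
  hip_conj : forall x y, hip y x = Cconj (hip x y);
  hip_pos : forall x, 0 <= Cre (hip x x);
  hip_def : forall x, Cre (hip x x) = 0 -> x = hzero;
  hcomplete : forall u : nat -> hs,
    (forall eps, eps > 0 -> exists N, forall m n, (N <= m)%nat -> (N <= n)%nat ->
        raw_dist hadd hscal hip (u m) (u n) < eps) ->
    exists l, forall eps, eps > 0 -> exists N, forall n, (N <= n)%nat ->
        raw_dist hadd hscal hip (u n) l < eps;
  hseparable : exists e : nat -> hs, forall x eps, eps > 0 ->
    exists n, raw_dist hadd hscal hip x (e n) < eps
}.
Arguments hzero {h}.
Arguments hadd {h}.
Arguments hscal {h}.
Arguments hip {h}.

Section Ops.
Context {H : Hilbert}.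

Definition hsub (x y : H) : H := hadd x (hscal (RC (-1)) y).
Definition hnorm (x : H) : R := sqrt (Cre (hip x x)).

Definition span (l : list H) (v : H) : Prop :=
  exists cs : list C, length cs = length l /\
    v = fold_right hadd hzero (map (fun p => hscal (fst p) (snd p)) (combine cs l)).

Definition is_subspace (D : H -> Prop) : Prop :=
  D hzero /\ (forall x y, D x -> D y -> D (hadd x y)) /\
  (forall a x, D x -> D (hscal a x)).

Definition linear_on (D : H -> Prop) (f : H -> H) : Prop :=
  forall a b x y, D x -> D y ->
    f (hadd (hscal a x) (hscal b y)) = hadd (hscal a (f x)) (hscal b (f y)).

Definition dense_in (K E : H -> Prop) : Prop :=
  forall y, K y -> forall eps, eps > 0 -> exists x, E x /\ hnorm (hsub x y) < eps.

Definition graph (D : H -> Prop) (f : H -> H) : H -> H -> Prop :=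
  fun x y => D x /\ y = f x.

Definition rel_closure (G : H -> H -> Prop) : H -> H -> Prop :=
  fun x y => forall eps, eps > 0 -> exists x' y',
    G x' y' /\ hnorm (hsub x x') < eps /\ hnorm (hsub y y') < eps.

(* adjoint of G, taken in the Hilbert space K (a closed subspace of H) *)
Definition adjoint_in (K : H -> Prop) (G : H -> H -> Prop) : H -> H -> Prop :=
  fun y z => K y /\ K z /\ forall x w, G x w -> hip w y = hip x z.

Definition selfadjoint_in (K : H -> Prop) (G : H -> H -> Prop) : Prop :=
  (forall x w, G x w -> K x /\ K w) /\
  dense_in K (fun x => exists w, G x w) /\
  (forall y z, G y z <-> adjoint_in K G y z).

Definition ess_selfadjoint_in (K : H -> Prop) (G : H -> H -> Prop) : Prop :=
  selfadjoint_in K (rel_closure G).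

(* real spectrum of the operator with graph G acting in K:
   lambda is NOT in the spectrum iff G - lambda : dom -> K is onto with
   bounded inverse *)
Definition spectrum_in (K : H -> Prop) (G : H -> H -> Prop) (lam : R) : Prop :=
  ~ (exists c : R,
       (forall y, K y -> exists x, G x (hadd y (hscal (RC lam) x))) /\
       (forall x w, G x w -> hnorm x <= c * hnorm (hsub w (hscal (RC lam) x)))).

Definition graph_dense (DA : H -> Prop) (A : H -> H) (E : H -> Prop) : Prop :=
  forall x, DA x -> forall eps, eps > 0 -> exists u, E u /\
    sqrt (hnorm (hsub u x) ^ 2 + hnorm (hsub (A u) (A x)) ^ 2) < eps.

(* spectrum of A_{|V} = P_V A P_V restricted to the finite-dimensional V:
   lambda is an eigenvalue, i.e. P_V A v = lambda v for some 0 <> v in V *)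
Definition fin_spectrum (A : H -> H) (V : H -> Prop) (lam : R) : Prop :=
  exists v, V v /\ v <> hzero /\
    forall w, V w -> hip (A v) w = Cmult (RC lam) (hip v w).

Definition span2 (x y : H) : H -> Prop :=
  fun u => exists a b : C, u = hadd (hscal a x) (hscal b y).

(* m = mu_2(x): the larger eigenvalue of A_{|span{x, Lx}} *)
Definition is_mu2 (A L : H -> H) (x : H) (m : R) : Prop :=
  fin_spectrum A (span2 x (L x)) m /\
  forall l, fin_spectrum A (span2 x (L x)) l -> l <= m.

Definition Spu (DA : H -> Prop) (A : H -> H) (P : H -> H)
    (DL : H -> Prop) (L : H -> H) (lam : R) : Prop :=
  exists vs : nat -> list H,
    let V := fun n => span (vs n) in
    let W := fun n u => exists u1 u2, V n u1 /\ V n u2 /\ u = hadd u1 (L u2) in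
    (forall n, Forall DL (vs n)) /\
    (forall n x, V n x -> V (S n) x) /\
    graph_dense DA A (fun u => exists n, W n u) /\
    (forall eps, eps > 0 -> exists N, forall n, (N <= n)%nat ->
        exists mu, fin_spectrum A (W n) mu /\ Rabs (lam - mu) < eps) /\
    ~ spectrum_in (fun _ => True) (graph DA A) lam.

Definition weak_to0 (xs : nat -> H) : Prop :=
  forall y, Un_cv (fun n => Cmod (hip (xs n) y)) 0.

Definition strong_to0 (xs : nat -> H) : Prop :=
  Un_cv (fun n => hnorm (xs n)) 0.

End Ops.

Inductive Rbar := Fin (r : R) | PInf | MInf.

Definition Rbar_le (x y : Rbar) : Prop :=
  match x, y with
  | MInf, _ => True
  | _, PInf => True
  | Fin a, Fin b => a <= b
  | _, _ => False
  end.
Definition Rbar_lt (x y : Rbar) : Prop := Rbar_le x y /\ x <> y.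
Definition Rbar_min (x y : Rbar) : Rbar :=
  match x, y with
  | MInf, _ => MInf
  | _, MInf => MInf
  | PInf, z => z
  | z, PInf => z
  | Fin a, Fin b => Fin (Rmin a b)
  end.

Definition is_sup_Rbar (S : Rbar -> Prop) (l : Rbar) : Prop :=
  (forall x, S x -> Rbar_le x l) /\ (forall b, (forall x, S x -> Rbar_le x b) -> Rbar_le l b).
Definition is_inf_Rbar (S : Rbar -> Prop) (l : Rbar) : Prop :=
  (forall x, S x -> Rbar_le l x) /\ (forall b, (forall x, S x -> Rbar_le b x) -> Rbar_le b l).

Definition is_glb (E : R -> Prop) (m : R) : Prop :=
  (forall x, E x -> m <= x) /\ (forall b, (forall x, E x -> b <= x) -> b <= m).

Definition is_liminf (u : nat -> R) (l : Rbar) : Prop :=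
  exists f : nat -> Rbar,
    (forall N, is_inf_Rbar (fun y => exists n, (N <= n)%nat /\ y = Fin (u n)) (f N)) /\
    is_sup_Rbar (fun y => exists N, y = f N) l.
Definition is_limsup (u : nat -> R) (l : Rbar) : Prop :=
  exists f : nat -> Rbar,
    (forall N, is_sup_Rbar (fun y => exists n, (N <= n)%nat /\ y = Fin (u n)) (f N)) /\
    is_inf_Rbar (fun y => exists N, y = f N) l.

(* Main.v *)
Require Import Defs.
From Stdlib Require Import Reals List Lra Lia Psatz Classical ClassicalEpsilon Ring Field.
Open Scope R_scope.
Notation CC := Defs.C.


Lemma Ceq (a b : CC) : Cre a = Cre b -> Cim a = Cim b -> a = b.
Proof. destruct a, b; simpl; intros; subst; reflexivity. Qed.

Definition C0 := RC 0.
Definition C1 := RC 1.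
Definition Copp (a : CC) : CC := mkC (- Cre a) (- Cim a).
Definition Cminus (a b : CC) : CC := Cplus a (Copp b).

Lemma Cring : ring_theory C0 C1 Cplus Cmult Cminus Copp (@eq CC).
Proof. constructor; intros; apply Ceq; simpl; ring. Qed.
Add Ring Cr : Cring.

Ltac csolve := apply Ceq; simpl; ring.

Section HB.
Lemma hscal0 {H : Hilbert} (x : H) : hscal (RC 0) x = hzero.
Proof.
  set (y := hscal (RC 0) x).
  assert (Hy : y = hadd y y).
  { unfold y. rewrite <- hscal_distr_r. f_equal. csolve. }
  rewrite <- (hadd_opp H y). rewrite Hy at 2.
  rewrite <- hadd_assoc, hadd_opp, hadd_0. reflexivity.
Qed.

Lemma hip_zero_l {H : Hilbert} (z : H) : hip hzero z = RC 0.
Proof.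
  rewrite <- (hscal0 (@hzero H)), hip_scal_l. csolve.
Qed.

Lemma hip_sub_l {H : Hilbert} (x y z : H) :
  hip (hsub x y) z = Cplus (hip x z) (Cmult (RC (-1)) (hip y z)).
Proof. unfold hsub. rewrite hip_add_l, hip_scal_l. reflexivity. Qed.

Lemma hip_add_r {H : Hilbert} (x y z : H) :
  hip x (hadd y z) = Cplus (hip x y) (hip x z).
Proof.
  rewrite hip_conj, hip_add_l. rewrite (hip_conj H x y), (hip_conj H x z). csolve.
Qed.

Lemma hip_scal_r {H : Hilbert} (a : CC) (x y : H) :
  hip x (hscal a y) = Cmult (Cconj a) (hip x y).
Proof.
  rewrite hip_conj, hip_scal_l. rewrite (hip_conj H x y). csolve.
Qed.

Lemma hip_zero_r {H : Hilbert} (z : H) : hip z hzero = RC 0.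
Proof. rewrite hip_conj, hip_zero_l. csolve. Qed.

Lemma hip_sub_r {H : Hilbert} (x y z : H) :
  hip x (hsub y z) = Cplus (hip x y) (Cmult (RC (-1)) (hip x z)).
Proof. unfold hsub. rewrite hip_add_r, hip_scal_r. csolve. Qed.

Lemma hext {H : Hilbert} (u v : H) : (forall z, hip u z = hip v z) -> u = v.
Proof.
  intro E. set (d := hsub u v).
  assert (Hd : d = hzero).
  { apply hip_def. unfold d. rewrite hip_sub_l, E. simpl. ring. }
  unfold d, hsub in Hd.
  assert (E2 : hadd (hadd u (hscal (RC (-1)) v)) v = v) by (rewrite Hd, hadd_comm, hadd_0; reflexivity).
  rewrite <- hadd_assoc, (hadd_comm H _ v), hadd_opp, hadd_0 in E2. exact E2.
Qed.
End HB.

Ltac ipexp := unfold hsub; repeat (rewrite ?hip_add_l, ?hip_scal_l, ?hip_zero_l, ?hip_add_r, ?hip_scal_r, ?hip_zero_r).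
Ltac vsolve := apply hext; let z := fresh "z" in intro z; ipexp; csolve.

Goal forall (H : Hilbert) (x y : H) (a : CC), hadd (hscal a x) (hsub y (hscal a x)) = y.
intros. vsolve. Qed.

Definition nsq {H : Hilbert} (x : H) : R := Cre (hip x x).

Lemma nsq_nonneg {H : Hilbert} (x : H) : 0 <= nsq x.
Proof. apply hip_pos. Qed.

Lemma nsq_pos {H : Hilbert} (x : H) : x <> hzero -> 0 < nsq x.
Proof.
  intro Hx. destruct (nsq_nonneg x) as [h|h]; auto. exfalso; apply Hx, hip_def; auto.
Qed.

Lemma nsq_zero {H : Hilbert} (x : H) : nsq x = 0 -> x = hzero.
Proof. apply hip_def. Qed.

Lemma hnorm_nsq {H : Hilbert} (x : H) : hnorm x = sqrt (nsq x).
Proof. reflexivity. Qed.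

Lemma hnorm_sq {H : Hilbert} (x : H) : hnorm x * hnorm x = nsq x.
Proof. unfold hnorm. apply sqrt_sqrt, nsq_nonneg. Qed.

Lemma hnorm_nonneg {H : Hilbert} (x : H) : 0 <= hnorm x.
Proof. apply sqrt_pos. Qed.

Lemma hip_self_im {H : Hilbert} (x : H) : Cim (hip x x) = 0.
Proof.
  pose proof (hip_conj H x x) as E. apply (f_equal Cim) in E. simpl in E. lra.
Qed.

Lemma hip_re_sym {H : Hilbert} (x y : H) : Cre (hip y x) = Cre (hip x y).
Proof. rewrite (hip_conj H x y). reflexivity. Qed.

Lemma hip_im_sym {H : Hilbert} (x y : H) : Cim (hip y x) = - Cim (hip x y).
Proof. rewrite (hip_conj H x y). reflexivity. Qed.

Lemma nsq_comb {H : Hilbert} (u w : H) (t : R) :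
  nsq (hadd u (hscal (RC t) w)) = nsq u + 2 * t * Cre (hip u w) + t * t * nsq w.
Proof.
  unfold nsq. ipexp. simpl. rewrite (hip_re_sym u w), (hip_im_sym u w), (hip_self_im w). ring.
Qed.

Lemma CS_re {H : Hilbert} (u w : H) : Cre (hip u w) ^ 2 <= nsq u * nsq w.
Proof.
  destruct (nsq_nonneg w) as [hw|hw].
  - pose proof (nsq_nonneg (hadd u (hscal (RC (- (Cre (hip u w) / nsq w))) w))) as P.
    rewrite nsq_comb in P.
    set (r := Cre (hip u w)) in *. set (n := nsq w) in *.
    assert (E : nsq u + 2 * - (r / n) * r + - (r / n) * - (r / n) * n = nsq u - r * r / n) by (field; lra).
    rewrite E in P.
    assert (r * r / n <= nsq u) by lra.
    apply (Rmult_le_compat_r n) in H0; [|lra].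
    replace (r * r / n * n) with (r*r) in H0 by (field; lra). nra.
  - symmetry in hw. apply nsq_zero in hw. subst w. pose proof (nsq_nonneg u). unfold nsq at 2. rewrite !hip_zero_r. simpl. nra.

Qed.

Lemma CS_mod {H : Hilbert} (u w : H) :
  Cre (hip u w) ^ 2 + Cim (hip u w) ^ 2 <= nsq u * nsq w.
Proof.
  set (z := hip u w).
  set (m := Cre z ^ 2 + Cim z ^ 2).
  destruct (Req_dec m 0) as [h0|h0].
  - rewrite h0. pose proof (nsq_nonneg u); pose proof (nsq_nonneg w); nra.
  - pose proof (CS_re u (hscal z w)) as P.
    assert (E1 : Cre (hip u (hscal z w)) = m).
    { rewrite hip_scal_r. fold z. unfold m. simpl. ring. }
    assert (E2 : nsq (hscal z w) = m * nsq w).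
    { unfold nsq. rewrite hip_scal_l, hip_scal_r. simpl.
      rewrite (hip_self_im w). unfold m. ring. }
    rewrite E1, E2 in P.
    assert (0 <= m) by (unfold m; pose proof (pow2_ge_0 (Cre z)); pose proof (pow2_ge_0 (Cim z)); lra).
    assert (0 < m) by (destruct H0; auto; congruence).
    assert (m * m <= m * (nsq u * nsq w)) by nra.
    apply Rmult_le_reg_l in H2; auto.
Qed.

Lemma Cmod_sq (z : CC) : Cmod z * Cmod z = Cre z ^ 2 + Cim z ^ 2.
Proof. unfold Cmod. apply sqrt_sqrt. nra. Qed.

Lemma Cmod_nonneg (z : CC) : 0 <= Cmod z.
Proof. apply sqrt_pos. Qed.

Lemma Cre_le_Cmod (z : CC) : Rabs (Cre z) <= Cmod z.
Proof.
  unfold Cmod. rewrite <- sqrt_Rsqr_abs. apply sqrt_le_1_alt. unfold Rsqr. nra.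
Qed.

Lemma sub0 {H : Hilbert} (D : H -> Prop) : is_subspace D -> D hzero.
Proof. intros [h _]; exact h. Qed.
Lemma sub_add {H : Hilbert} (D : H -> Prop) x y : is_subspace D -> D x -> D y -> D (hadd x y).
Proof. intros [_ [h _]]; auto. Qed.
Lemma sub_scal {H : Hilbert} (D : H -> Prop) a x : is_subspace D -> D x -> D (hscal a x).
Proof. intros [_ [_ h]]; auto. Qed.
Lemma sub_sub {H : Hilbert} (D : H -> Prop) x y : is_subspace D -> D x -> D y -> D (hsub x y).
Proof. intros. unfold hsub. apply sub_add; auto. apply sub_scal; auto. Qed.
Lemma sub_comb {H : Hilbert} (D : H -> Prop) a b x y : is_subspace D -> D x -> D y ->
  D (hadd (hscal a x) (hscal b y)).
Proof. intros. apply sub_add; auto; apply sub_scal; auto. Qed.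

Lemma lin_add {H : Hilbert} (D : H -> Prop) f x y : linear_on D f -> D x -> D y ->
  f (hadd x y) = hadd (f x) (f y).
Proof.
  intros Hf Hx Hy. pose proof (Hf (RC 1) (RC 1) x y Hx Hy) as E.
  rewrite !hscal_1 in E. exact E.
Qed.
Lemma lin_scal {H : Hilbert} (D : H -> Prop) f a x : linear_on D f -> D x ->
  f (hscal a x) = hscal a (f x).
Proof.
  intros Hf Hx. pose proof (Hf a (RC 0) x x Hx Hx) as E.
  rewrite !hscal0, !hadd_0 in E. exact E.
Qed.
Lemma lin_sub {H : Hilbert} (D : H -> Prop) f x y : is_subspace D -> linear_on D f -> D x -> D y ->
  f (hsub x y) = hsub (f x) (f y).
Proof.
  intros HD Hf Hx Hy. unfold hsub. rewrite (lin_add D); auto. rewrite (lin_scal D); auto.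
  apply sub_scal; auto.
Qed.
Lemma lin0 {H : Hilbert} (D : H -> Prop) f : is_subspace D -> linear_on D f -> f hzero = hzero.
Proof.
  intros HD Hf. rewrite <- (hscal0 (@hzero H)). rewrite (lin_scal D); auto. rewrite !hscal0; reflexivity.
  apply sub0; auto.
Qed.
Lemma lin_comb {H : Hilbert} (D : H -> Prop) f a b x y : linear_on D f -> D x -> D y ->
  f (hadd (hscal a x) (hscal b y)) = hadd (hscal a (f x)) (hscal b (f y)).
Proof. intros Hf; apply Hf. Qed.

Lemma hnorm_le_sq {H : Hilbert} (a b : H) (k : R) :
  hnorm a <= k * hnorm b -> nsq a <= k * k * nsq b.
Proof.
  intro h. rewrite <- (hnorm_sq a), <- (hnorm_sq b).
  pose proof (hnorm_nonneg a). pose proof (hnorm_nonneg b).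
  assert (hnorm a * hnorm a <= (k * hnorm b) * (k * hnorm b)) by (apply Rmult_le_compat; lra).
  nra.
Qed.

Lemma nsq_scal {H : Hilbert} (r : R) (x : H) : nsq (hscal (RC r) x) = r * r * nsq x.
Proof. unfold nsq. rewrite hip_scal_l, hip_scal_r. simpl. rewrite hip_self_im. ring. Qed.

Lemma nsq_zero_eq {H : Hilbert} : nsq (@hzero H) = 0.
Proof. unfold nsq. rewrite hip_zero_l. reflexivity. Qed.

Lemma hnorm_zero {H : Hilbert} : hnorm (@hzero H) = 0.
Proof. unfold hnorm. fold (nsq (@hzero H)). rewrite nsq_zero_eq. apply sqrt_0. Qed.

Lemma Rabs_le_between a b : Rabs a <= b -> -b <= a <= b.
Proof. unfold Rabs; destruct Rcase_abs; lra. Qed.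

Lemma Cim_RC r : Cim (RC r) = 0.
Proof. reflexivity. Qed.

Lemma spec_key {H : Hilbert} (K : H -> Prop) (T : H -> H -> Prop) (d : R)
  (KS : is_subspace K)
  (T1 : forall u w, T u w -> K u /\ K w)
  (Tsym : forall u1 w1 u2 w2, T u1 w1 -> T u2 w2 -> hip w1 u2 = hip u1 w2)
  (Tlin : forall a b u1 w1 u2 w2, T u1 w1 -> T u2 w2 ->
      T (hadd (hscal a u1) (hscal b u2)) (hadd (hscal a w1) (hscal b w2)))
  (Hres : forall mu, mu > d -> exists c,
      (forall y, K y -> exists x, T x (hadd y (hscal (RC mu) x))) /\
      (forall x w, T x w -> hnorm x <= c * hnorm (hsub w (hscal (RC mu) x)))) :
  forall mu, mu > d -> forall u w, T u w -> Cre (hip w u) <= mu * nsq u.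
Proof.
  intros mu Hmu.
  destruct (Hres mu Hmu) as [c [Hsurj Hbnd]].
  assert (exB : forall w, exists u, K w -> T u (hadd w (hscal (RC mu) u))).
  { intro w. destruct (classic (K w)) as [Kw|nKw].
    - destruct (Hsurj w Kw) as [x Hx]. exists x; auto.
    - exists hzero; intro; contradiction. }
  set (B := fun w => proj1_sig (constructive_indefinite_description _ (exB w))).
  assert (B1 : forall w, K w -> T (B w) (hadd w (hscal (RC mu) (B w)))).
  { intros w Kw. unfold B. destruct (constructive_indefinite_description _ (exB w)) as [x Hx].
    simpl. auto. }
  assert (BK : forall w, K w -> K (B w)) by (intros w Kw; apply (T1 _ _ (B1 w Kw))).
  assert (Buniq : forall w u, K w -> T u (hadd w (hscal (RC mu) u)) -> u = B w).
  { intros w u Kw Tu.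
    pose proof (Tlin (RC 1) (RC (-1)) _ _ _ _ Tu (B1 w Kw)) as TT.
    pose proof (Hbnd _ _ TT) as HB.
    assert (E : hsub (hadd (hscal (RC 1) (hadd w (hscal (RC mu) u)))
          (hscal (RC (-1)) (hadd w (hscal (RC mu) (B w)))))
          (hscal (RC mu) (hadd (hscal (RC 1) u) (hscal (RC (-1)) (B w)))) = hzero) by vsolve.
    rewrite E, hnorm_zero, Rmult_0_r in HB.
    assert (Z : hadd (hscal (RC 1) u) (hscal (RC (-1)) (B w)) = hzero).
    { apply nsq_zero. rewrite <- hnorm_sq. pose proof (hnorm_nonneg (hadd (hscal (RC 1) u) (hscal (RC (-1)) (B w)))). nra. }
    assert (E2 : u = hadd (hadd (hscal (RC 1) u) (hscal (RC (-1)) (B w))) (B w)) by vsolve.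
    rewrite E2, Z. vsolve. }
  assert (Bbnd : forall w, K w -> nsq (B w) <= c * c * nsq w).
  { intros w Kw. pose proof (Hbnd _ _ (B1 w Kw)) as h.
    assert (E : hsub (hadd w (hscal (RC mu) (B w))) (hscal (RC mu) (B w)) = w) by vsolve.
    rewrite E in h. apply hnorm_le_sq; auto. }
  assert (Blin : forall a b z1 z2, K z1 -> K z2 ->
     B (hadd (hscal a z1) (hscal b z2)) = hadd (hscal a (B z1)) (hscal b (B z2))).
  { intros a b z1 z2 K1 K2. symmetry. apply Buniq.
    - apply sub_comb; auto.
    - pose proof (Tlin a b _ _ _ _ (B1 z1 K1) (B1 z2 K2)) as TT.
      assert (E : hadd (hscal a (hadd z1 (hscal (RC mu) (B z1)))) (hscal b (hadd z2 (hscal (RC mu) (B z2))))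
        = hadd (hadd (hscal a z1) (hscal b z2)) (hscal (RC mu) (hadd (hscal a (B z1)) (hscal b (B z2))))) by vsolve.
      rewrite <- E; exact TT. }
  assert (Bsym : forall z1 z2, K z1 -> K z2 -> hip (B z1) z2 = hip z1 (B z2)).
  { intros z1 z2 K1 K2. pose proof (Tsym _ _ _ _ (B1 z1 K1) (B1 z2 K2)) as E.
    revert E. ipexp. intro E. apply (f_equal (fun q => (Cre q, Cim q))) in E. simpl in E.
    injection E; intros E1 E2. apply Ceq; lra. }
  assert (Claim : forall w, K w -> Cre (hip (B w) w) <= 0).
  { intros w0 Kw0. apply Rnot_lt_le. intro Hpos.
    set (cc := c * c + 1).
    assert (Babs : forall w, K w -> Rabs (Cre (hip (B w) w)) <= cc * nsq w).
    { intros w Kw. pose proof (CS_re (B w) w) as h. pose proof (Bbnd w Kw) as h2.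
      pose proof (nsq_nonneg w). pose proof (nsq_nonneg (B w)).
      set (X := Cre (hip (B w) w)) in *.
      assert (X ^ 2 <= (c * c * nsq w) * nsq w) by (apply (Rle_trans _ _ _ h); apply Rmult_le_compat_r; auto).
      assert (0 <= cc * nsq w) by (unfold cc; nra).
      apply Rabs_le. split.
      - destruct (Rle_dec (- (cc * nsq w)) X); auto. exfalso.
        assert ((cc * nsq w) * (cc * nsq w) < X * X) by nra.
        unfold cc in *. nra.
      - destruct (Rle_dec X (cc * nsq w)); auto. exfalso.
        assert ((cc * nsq w) * (cc * nsq w) < X * X) by nra.
        unfold cc in *. nra. }
    assert (w0nz : w0 <> hzero).
    { intro e. rewrite e, hip_zero_r in Hpos. simpl in Hpos. lra. }
    set (E := fun r => exists w, K w /\ w <> hzero /\ r = Cre (hip (B w) w) / nsq w).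
    assert (Ebound : bound E).
    { exists cc. intros r [w [Kw [nz ->]]]. pose proof (nsq_pos w nz).
      pose proof (Babs w Kw) as h. apply Rabs_le_between in h.
      apply (Rmult_le_reg_r (nsq w)); auto. field_simplify; lra. }
    assert (Ene : exists r, E r) by (eexists; exists w0; eauto).
    destruct (completeness E Ebound Ene) as [M [HMub HMlub]].
    assert (Mpos : 0 < M).
    { assert (E (Cre (hip (B w0) w0) / nsq w0)) as h by (exists w0; eauto).
      apply HMub in h. pose proof (nsq_pos w0 w0nz).
      assert (0 < Cre (hip (B w0) w0) / nsq w0) by (apply Rdiv_lt_0_compat; auto). lra. }
    assert (Sge : forall z, K z -> Cre (hip (B z) z) <= M * nsq z).
    { intros z Kz. destruct (classic (z = hzero)) as [e|nz].
      - rewrite e, hip_zero_r, nsq_zero_eq. simpl. lra.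
      - assert (E (Cre (hip (B z) z) / nsq z)) as h by (exists z; eauto).
        apply HMub in h. pose proof (nsq_pos z nz).
        apply (Rmult_le_compat_r (nsq z)) in h; [|lra].
        field_simplify in h; lra. }
    assert (Hmu' : mu + / M > d) by (pose proof (Rinv_0_lt_compat M Mpos); lra).
    destruct (Hres _ Hmu') as [c' [_ Hbnd']].
    set (K0 := M + cc).
    assert (K0pos : 0 < K0) by (unfold K0, cc; nra).
    set (dl := Rmin (M / 2) (M ^ 4 / (4 * (c' * c' * K0 + 1)))).
    assert (dlpos : 0 < dl).
    { unfold dl. apply Rmin_pos. lra. apply Rdiv_lt_0_compat. apply pow_lt; auto.
      assert (0 <= c' * c' * K0) by (apply Rmult_le_pos; nra). lra. }
    assert (Hw : exists w, K w /\ w <> hzero /\ M - dl < Cre (hip (B w) w) / nsq w).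
    { apply NNPP. intro hn.
      assert (is_upper_bound E (M - dl)).
      { intros r [w [Kw [nz ->]]]. apply Rnot_lt_le. intro hl. apply hn. exists w; auto. }
      apply HMlub in H0. lra. }
    destruct Hw as [w [Kw [wnz Hwr]]].
    pose proof (nsq_pos w wnz) as nwpos.
    set (s := M * nsq w - Cre (hip (B w) w)).
    assert (sdl : s < dl * nsq w).
    { unfold s. apply (Rmult_lt_compat_r (nsq w)) in Hwr; auto.
      field_simplify in Hwr; lra. }
    set (y := hsub (hscal (RC M) w) (B w)).
    assert (Ky : K y) by (unfold y; apply sub_sub; auto; apply sub_scal; auto).
    assert (Quad : forall t, 0 <= s - 2 * t * nsq y + t * t * (M * nsq y - Cre (hip (B y) y))).
    { intro t.
      set (z := hadd (hscal (RC 1) w) (hscal (RC (- t)) y)).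
      assert (Kz : K z) by (apply sub_comb; auto).
      pose proof (Sge z Kz) as hz.
      unfold z in hz. rewrite Blin in hz; auto.
      assert (S1 : hip (B y) w = hip y (B w)) by (apply Bsym; auto).
      assert (e1 : nsq y = M * Cre (hip w y) - Cre (hip (B w) y)).
      { unfold nsq. unfold y at 1. rewrite hip_sub_l, hip_scal_l. simpl. ring. }
      assert (e2 : Cre (hip y (B w)) = Cre (hip (B w) y)) by apply hip_re_sym.
      assert (e3 : Cre (hip y w) = Cre (hip w y)) by apply hip_re_sym.
      revert hz. unfold nsq. ipexp. rewrite S1. simpl. intro hz.
      rewrite e2, e3 in hz. unfold s, nsq. unfold nsq in e1.
      assert (Cre (hip y y) * (2*t) = (M * Cre (hip w y) - Cre (hip (B w) y)) * (2*t)) by (rewrite e1; ring).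
      lra. }
    assert (Hyle : nsq y <= K0 * s).
    { pose proof (Quad (/ K0)) as q.
      pose proof (Babs y Ky) as hb. apply Rabs_le_between in hb.
      pose proof (nsq_nonneg y).
      assert (M * nsq y - Cre (hip (B y) y) <= K0 * nsq y) by (unfold K0; lra).
      assert (/ K0 * / K0 * (M * nsq y - Cre (hip (B y) y)) <= / K0 * / K0 * (K0 * nsq y)).
      { apply Rmult_le_compat_l; auto. pose proof (Rinv_0_lt_compat K0 K0pos). nra. }
      replace (/ K0 * / K0 * (K0 * nsq y)) with (nsq y / K0) in H2 by (field; lra).
      assert (0 <= s - nsq y / K0).
      { replace (s - nsq y / K0) with (s - 2 * / K0 * nsq y + nsq y / K0) by (field; lra). lra. }
      apply (Rmult_le_compat_l K0) in H3; [|lra].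
      replace (K0 * (s - nsq y / K0)) with (K0 * s - nsq y) in H3 by (field; lra). lra. }
    pose proof (Hbnd' _ _ (B1 w Kw)) as hb'.
    assert (Ev : hsub (hadd w (hscal (RC mu) (B w))) (hscal (RC (mu + / M)) (B w)) = hscal (RC (/ M)) y).
    { apply hext; intro q. unfold y. ipexp. apply Ceq; simpl; field; lra. }
    rewrite Ev in hb'. apply hnorm_le_sq in hb'. rewrite nsq_scal in hb'.
    assert (Lw : (M - dl) * nsq w < Cre (hip (B w) w)).
    { apply (Rmult_lt_compat_r (nsq w)) in Hwr; auto. field_simplify in Hwr; lra. }
    assert (dlM : dl <= M / 2) by apply Rmin_l.
    assert (dlM2 : dl <= M ^ 4 / (4 * (c' * c' * K0 + 1))) by apply Rmin_r.
    pose proof (CS_re (B w) w) as cs.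
    assert (Lu : (M - dl) * (M - dl) * nsq w < nsq (B w)).
    { assert (0 < (M - dl) * nsq w) by (apply Rmult_lt_0_compat; lra).
      assert (((M - dl) * nsq w) * ((M - dl) * nsq w) < nsq (B w) * nsq w) by nra.
      apply (Rmult_lt_reg_r (nsq w)); auto. nra. }
    assert (Up : nsq (B w) <= c' * c' * (/ M * / M) * (K0 * dl) * nsq w).
    { assert (nsq y <= K0 * (dl * nsq w)) by (apply (Rle_trans _ _ _ Hyle); apply Rmult_le_compat_l; lra).
      assert (0 <= c' * c' * (/ M * / M)) by (pose proof (Rinv_0_lt_compat M Mpos); nra).
      apply (Rle_trans _ _ _ hb').
      replace (c' * c' * (/ M * / M * nsq y)) with ((c' * c' * (/ M * / M)) * nsq y) by ring.
      replace (c' * c' * (/ M * / M) * (K0 * dl) * nsq w) with ((c' * c' * (/ M * / M)) * (K0 * (dl * nsq w))) by ring.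
      apply Rmult_le_compat_l; auto. }
    assert (Fin : (M - dl) * (M - dl) < c' * c' * (/ M * / M) * (K0 * dl)).
    { apply (Rmult_lt_reg_r (nsq w)); auto. lra. }
    assert (M * M / 4 <= (M - dl) * (M - dl)) by nra.
    assert (c' * c' * K0 * dl < M ^ 4 / 4).
    { set (q := c' * c' * K0). assert (0 <= q) by (unfold q; apply Rmult_le_pos; nra).
      apply (Rmult_le_compat_l q) in dlM2; auto.
      assert (q * (M ^ 4 / (4 * (q + 1))) < M ^ 4 / 4).
      { assert (0 < M ^ 4) by (apply pow_lt; auto).
        apply (Rmult_lt_reg_r (4 * (q + 1))); [lra|]. field_simplify; [nra|lra]. }
      change (c' * c' * K0) with q in dlM2. lra. }
    assert (EqF : c' * c' * (/ M * / M) * (K0 * dl) = (c' * c' * K0 * dl) / (M * M)) by (field; lra).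
    rewrite EqF in Fin.
    assert ((c' * c' * K0 * dl) / (M * M) < M * M / 4).
    { apply (Rmult_lt_reg_r (M * M)); [nra|].
      replace (c' * c' * K0 * dl / (M * M) * (M * M)) with (c' * c' * K0 * dl) by (field; lra).
      replace (M * M / 4 * (M * M)) with (M ^ 4 / 4) by (simpl; field). lra. }
    lra. }
  intros u w Tuw.
  destruct (T1 _ _ Tuw) as [Ku Kw].
  set (z := hsub w (hscal (RC mu) u)).
  assert (Kz : K z) by (apply sub_sub; auto; apply sub_scal; auto).
  assert (Ez : hadd z (hscal (RC mu) u) = w) by (unfold z; vsolve).
  assert (Hu : u = B z) by (apply Buniq; auto; rewrite Ez; auto).
  pose proof (Claim z Kz) as Cz. rewrite <- Hu in Cz.
  rewrite <- Ez. ipexp. simpl. rewrite (hip_re_sym u z). unfold nsq. lra.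
Qed.

Lemma subT {H : Hilbert} : is_subspace (fun _ : H => True).
Proof. repeat split. Qed.

Lemma key_inst {H : Hilbert} (A P L : H -> H) (DL : H -> Prop) (d : R)
  (hPlin : linear_on (fun _ => True) P)
  (hPsym : forall x y, hip (P x) y = hip x (P y))
  (hLP : forall x, DL x -> P (L x) = hzero)
  (hQAQ : ess_selfadjoint_in (fun x => P x = hzero)
            (graph (fun y => exists w, DL w /\ y = L w)
                   (fun y => hsub (A (hsub y (P y))) (P (A (hsub y (P y)))))))
  (hd : is_lub (spectrum_in (fun x => P x = hzero)
                 (rel_closure
                   (graph (fun y => exists w, DL w /\ y = L w)
                          (fun y => hsub (A (hsub y (P y))) (P (A (hsub y (P y))))))))
               d) :
  forall mu, mu > d -> forall z, DL z -> Cre (hip (A (L z)) (L z)) <= mu * nsq (L z).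
Proof.
  set (K := fun x : H => P x = hzero).
  set (G0 := graph (fun y => exists w, DL w /\ y = L w)
                   (fun y => hsub (A (hsub y (P y))) (P (A (hsub y (P y)))))).
  set (T := rel_closure G0).
  assert (KS : is_subspace K).
  { unfold K. split; [|split].
    - apply (lin0 (fun _ => True)); auto. apply subT.
    - intros x y hx hy. rewrite (lin_add (fun _ => True)); auto. rewrite hx, hy, hadd_0; auto.
    - intros a x hx. rewrite (lin_scal (fun _ => True)); auto. rewrite hx.
      rewrite <- (hscal0 (@hzero H)), hscal_assoc. f_equal. csolve. }
  destruct hQAQ as [T1 [_ T3]].
  fold K G0 T in T1, T3.
  assert (Tsym : forall u1 w1 u2 w2, T u1 w1 -> T u2 w2 -> hip w1 u2 = hip u1 w2).
  { intros u1 w1 u2 w2 h1 h2. apply T3 in h2. destruct h2 as [_ [_ h2]]. apply h2; auto. }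
  assert (Tlin : forall a b u1 w1 u2 w2, T u1 w1 -> T u2 w2 ->
      T (hadd (hscal a u1) (hscal b u2)) (hadd (hscal a w1) (hscal b w2))).
  { intros a b u1 w1 u2 w2 h1 h2. apply T3.
    destruct (T1 _ _ h1) as [k1 k1']. destruct (T1 _ _ h2) as [k2 k2'].
    split; [apply sub_comb; auto|split; [apply sub_comb; auto|]].
    intros x w hxw. ipexp. rewrite (Tsym _ _ _ _ hxw h1), (Tsym _ _ _ _ hxw h2). reflexivity. }
  assert (Hres : forall mu, mu > d -> exists c,
      (forall y, K y -> exists x, T x (hadd y (hscal (RC mu) x))) /\
      (forall x w, T x w -> hnorm x <= c * hnorm (hsub w (hscal (RC mu) x)))).
  { intros mu hmu. destruct hd as [hub _].
    apply NNPP. intro hn. assert (spectrum_in K T mu) as hs by exact hn.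
    apply hub in hs. lra. }
  intros mu hmu z hz.
  set (u := L z).
  assert (Pu : P u = hzero) by (apply hLP; auto).
  assert (G0u : G0 u (hsub (A (hsub u (P u))) (P (A (hsub u (P u)))))).
  { split; auto. exists z; auto. }
  assert (Tu : T u (hsub (A (hsub u (P u))) (P (A (hsub u (P u)))))).
  { intros eps heps. do 2 eexists. split; [exact G0u|].
    assert (forall v : H, hnorm (hsub v v) = 0) as h0.
    { intro v. assert (hsub v v = hzero) as e by vsolve. rewrite e. apply hnorm_zero. }
    rewrite !h0. lra. }
  pose proof (spec_key K T d KS T1 Tsym Tlin Hres mu hmu _ _ Tu) as h.
  assert (e : hsub u (P u) = u) by (rewrite Pu; vsolve).
  rewrite e in h. revert h. ipexp. rewrite hPsym, Pu, hip_zero_r. simpl. intro h. lra.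
Qed.

Section Eig.
Variable H : Hilbert.
Variables DA DL : H -> Prop.
Variables A L P : H -> H.
Hypothesis hDA : is_subspace DA.
Hypothesis hAlin : linear_on DA A.
Hypothesis Asym : forall p q, DA p -> DA q -> hip (A p) q = hip p (A q).
Hypothesis hDL : is_subspace DL.
Hypothesis hLlin : linear_on DL L.
Hypothesis hDLA : forall x, DL x -> DA x.
Hypothesis hLDLA : forall x, DL x -> DA (L x).
Hypothesis hPlin : linear_on (fun _ => True) P.
Hypothesis hPsym : forall x y, hip (P x) y = hip x (P y).
Hypothesis hDLP : forall x, DL x -> P x = x.
Hypothesis hLP : forall x, DL x -> P (L x) = hzero.
Hypothesis hLinj : forall x y, DL x -> DL y -> L x = L y -> x = y.

Definition Eig (v : H) (mu : R) (w : H) := hip (A v) w = Cmult (RC mu) (hip v w).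
Definition Qf (mu : R) (u : H) := Cre (hip (A u) u) - mu * nsq u.

Lemma Eig_comb v mu a b w1 w2 : Eig v mu w1 -> Eig v mu w2 ->
  Eig v mu (hadd (hscal a w1) (hscal b w2)).
Proof. unfold Eig. intros e1 e2. ipexp. rewrite e1, e2. csolve. Qed.

Lemma Eig_add v mu w1 w2 : Eig v mu w1 -> Eig v mu w2 -> Eig v mu (hadd w1 w2).
Proof. unfold Eig. intros e1 e2. ipexp. rewrite e1, e2. csolve. Qed.

Lemma Eig_scal v mu a w : Eig v mu w -> Eig v mu (hscal a w).
Proof. unfold Eig. intros e1. ipexp. rewrite e1. csolve. Qed.

Lemma Eig_v v mu a w : DA v -> Eig v mu w -> Eig (hscal a v) mu w.
Proof. unfold Eig. intros hv e1. rewrite (lin_scal DA); auto. ipexp. rewrite e1. csolve. Qed.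

Lemma Qsplit mu p r : DA p -> DA r -> Eig p mu p -> Eig p mu r ->
  Qf mu (hadd p r) = Qf mu r.
Proof.
  intros hp hr e1 e2. unfold Qf, nsq. rewrite (lin_add DA); auto.
  assert (e3 : hip (A r) p = Cmult (RC mu) (hip r p)).
  { rewrite Asym; auto. rewrite (hip_conj H (A p) r), e2, (hip_conj H p r). csolve. }
  ipexp. rewrite e1, e2, e3. simpl. ring.
Qed.

Lemma eig_core mu mu' x y :
  (forall z, DL z -> Cre (hip (A (L z)) (L z)) <= mu' * nsq (L z)) ->
  DL x -> DL y ->
  Eig (hadd x (L y)) mu x -> Eig (hadd x (L y)) mu (L x) -> Eig (hadd x (L y)) mu (L y) ->
  forall a b, Qf mu (hadd (hscal a x) (hscal b (L x))) <=
     (mu' - mu) * nsq (hadd (hscal b (L x)) (hscal (Cmult (RC (-1)) a) (L y))).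
Proof.
  intros KEY hx hy e1 e2 e3 a b.
  set (v := hadd x (L y)).
  assert (hv : DA v) by (apply sub_add; auto).
  set (r := hadd (hscal b (L x)) (hscal (Cmult (RC (-1)) a) (L y))).
  assert (Er : r = L (hadd (hscal b x) (hscal (Cmult (RC (-1)) a) y))) by (unfold r; rewrite hLlin; auto).
  assert (hz : DL (hadd (hscal b x) (hscal (Cmult (RC (-1)) a) y))) by (apply sub_comb; auto).
  assert (hr : DA r) by (rewrite Er; auto).
  assert (E : hadd (hscal a x) (hscal b (L x)) = hadd (hscal a v) r) by (unfold v, r; vsolve).
  rewrite E. rewrite Qsplit; auto.
  - unfold Qf. pose proof (KEY _ hz) as k. rewrite <- Er in k. lra.
  - apply sub_scal; auto.
  - apply Eig_v; auto. apply Eig_scal. apply Eig_add; auto.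
  - apply Eig_v; auto. unfold r. apply Eig_comb; auto.
Qed.

Lemma orth_x_Ly x y : DL x -> DL y -> hip x (L y) = RC 0.
Proof. intros hx hy. rewrite <- (hDLP x hx) at 1. rewrite hPsym, hLP, hip_zero_r; auto. Qed.

Lemma orth_Ly_x x y : DL x -> DL y -> hip (L y) x = RC 0.
Proof. intros hx hy. rewrite hip_conj, orth_x_Ly; auto. csolve. Qed.

Lemma nsq_orth x y : DL x -> DL y -> nsq (hadd x (L y)) = nsq x + nsq (L y).
Proof. intros hx hy. unfold nsq. ipexp. rewrite orth_x_Ly, orth_Ly_x; auto. simpl. ring. Qed.

Lemma Asym_re u : DA u -> Cim (hip (A u) u) = 0.
Proof.
  intro hu. pose proof (Asym u u hu hu) as e. rewrite (hip_conj H u (A u)) in e.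
  apply (f_equal Cim) in e. simpl in e. rewrite Asym; auto. lra.
Qed.

Lemma Eig_self v m : Eig v m v -> Cre (hip (A v) v) = m * nsq v.
Proof. unfold Eig, nsq. intro e. rewrite e. simpl. rewrite hip_self_im. ring. Qed.

Lemma eig_bound mu mu' x y c m :
  (forall z, DL z -> Cre (hip (A (L z)) (L z)) <= mu' * nsq (L z)) -> mu' <= mu ->
  DL x -> DL y ->
  Eig (hadd x (L y)) mu x -> Eig (hadd x (L y)) mu (L x) -> Eig (hadd x (L y)) mu (L y) ->
  fin_spectrum A (span2 (hscal c x) (L (hscal c x))) m -> m <= mu.
Proof.
  intros KEY hmu hx hy e1 e2 e3 [u [[al [be ->]] [unz Hu]]].
  assert (Hs : span2 (hscal c x) (L (hscal c x)) (hadd (hscal al (hscal c x)) (hscal be (L (hscal c x))))).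
  { exists al, be; reflexivity. }
  pose proof (Hu _ Hs) as eu.
  change (Eig (hadd (hscal al (hscal c x)) (hscal be (L (hscal c x)))) m
     (hadd (hscal al (hscal c x)) (hscal be (L (hscal c x))))) in eu.
  apply Eig_self in eu.
  rewrite (lin_scal DL L c x hLlin hx) in eu, unz.
  set (u := hadd (hscal al (hscal c x)) (hscal be (hscal c (L x)))) in *.
  assert (Eu : u = hadd (hscal (Cmult al c) x) (hscal (Cmult be c) (L x))) by (unfold u; vsolve).
  pose proof (eig_core mu mu' x y KEY hx hy e1 e2 e3 (Cmult al c) (Cmult be c)) as hc.
  rewrite <- Eu in hc. unfold Qf in hc. rewrite eu in hc.
  pose proof (nsq_pos u unz). pose proof (nsq_nonneg (hadd (hscal (Cmult be c) (L x))
          (hscal (Cmult (RC (-1)) (Cmult al c)) (L y)))).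
  assert ((m - mu) * nsq u <= 0) by nra.
  destruct (Rle_dec m mu); auto. exfalso. nra.
Qed.
Lemma Lnz x : DL x -> x <> hzero -> L x <> hzero.
Proof.
  intros hx nz e. apply nz. apply hLinj; auto. apply sub0; auto.
  rewrite e. symmetry. apply (lin0 DL); auto.
Qed.

Lemma mu2_exists x : DL x -> x <> hzero -> exists m, is_mu2 A L x m.
Proof.
  intros hx nz.
  pose proof (Lnz x hx nz) as Lnz0.
  assert (hxA : DA x) by auto. assert (hLA : DA (L x)) by auto.
  set (p := nsq x). set (q := nsq (L x)).
  assert (pp : 0 < p) by (apply nsq_pos; auto).
  assert (qp : 0 < q) by (apply nsq_pos; auto).
  set (a11 := Cre (hip (A x) x)). set (a22 := Cre (hip (A (L x)) (L x))).
  set (z := hip (A (L x)) x).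
  assert (E11 : hip (A x) x = RC a11) by (apply Ceq; [reflexivity| apply Asym_re; auto]).
  assert (E22 : hip (A (L x)) (L x) = RC a22) by (apply Ceq; [reflexivity| apply Asym_re; auto]).
  assert (E21 : hip (A x) (L x) = Cconj z) by (rewrite Asym; auto; apply hip_conj).
  assert (Ep : hip x x = RC p) by (apply Ceq; [reflexivity| apply hip_self_im]).
  assert (Eq : hip (L x) (L x) = RC q) by (apply Ceq; [reflexivity| apply hip_self_im]).
  assert (O1 : hip x (L x) = RC 0) by (apply orth_x_Ly; auto).
  assert (O2 : hip (L x) x = RC 0) by (apply orth_Ly_x; auto).
  assert (Ex1 : forall al be, hip (A (hadd (hscal al x) (hscal be (L x)))) x =
            Cplus (Cmult al (RC a11)) (Cmult be z)).
  { intros. rewrite hAlin; auto. ipexp. rewrite E11. reflexivity. }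
  assert (Ex2 : forall al be, hip (A (hadd (hscal al x) (hscal be (L x)))) (L x) =
            Cplus (Cmult al (Cconj z)) (Cmult be (RC a22))).
  { intros. rewrite hAlin; auto. ipexp. rewrite E21, E22. reflexivity. }
  assert (Ex3 : forall al be, hip (hadd (hscal al x) (hscal be (L x))) x = Cmult al (RC p)).
  { intros. ipexp. rewrite Ep, O2. csolve. }
  assert (Ex4 : forall al be, hip (hadd (hscal al x) (hscal be (L x))) (L x) = Cmult be (RC q)).
  { intros. ipexp. rewrite Eq, O1. csolve. }
  assert (Sx : span2 x (L x) x) by (exists (RC 1), (RC 0); vsolve).
  assert (SLx : span2 x (L x) (L x)) by (exists (RC 0), (RC 1); vsolve).
  assert (EigS : forall al be l,
     Cplus (Cmult al (RC a11)) (Cmult be z) = Cmult (RC l) (Cmult al (RC p)) ->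
     Cplus (Cmult al (Cconj z)) (Cmult be (RC a22)) = Cmult (RC l) (Cmult be (RC q)) ->
     forall w, span2 x (L x) w -> Eig (hadd (hscal al x) (hscal be (L x))) l w).
  { intros al be l h1 h2 w [ga [de ->]]. apply Eig_comb; unfold Eig.
    - rewrite Ex1, Ex3; auto.
    - rewrite Ex2, Ex4; auto. }
  set (zz := Cre z * Cre z + Cim z * Cim z).
  assert (zzn : 0 <= zz) by (unfold zz; nra).
  set (S := a11 * q + a22 * p).
  set (D := (a11 * q - a22 * p) * (a11 * q - a22 * p) + 4 * p * q * zz).
  assert (pq0 : 0 <= p * q) by nra. assert (pqz : 0 <= p * q * zz) by (apply Rmult_le_pos; lra).
  assert (Dn : 0 <= D) by (unfold D; pose proof (pow2_ge_0 (a11 * q - a22 * p)); simpl in *; nra).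
  set (s := sqrt D).
  assert (ss : s * s = D) by (apply sqrt_sqrt; auto).
  assert (sn : 0 <= s) by apply sqrt_pos.
  set (m := (S + s) / (2 * p * q)).
  assert (Tm : 2 * p * q * m = S + s) by (unfold m; field; lra).
  assert (froot : (a11 - m * p) * (a22 - m * q) = zz).
  { assert (4 * p * q * ((a11 - m * p) * (a22 - m * q) - zz) = 0).
    { replace (4 * p * q * ((a11 - m * p) * (a22 - m * q) - zz)) with
        ((2 * a11 * q - 2 * p * q * m) * (2 * a22 * p - 2 * p * q * m) - 4 * p * q * zz) by ring.
      rewrite Tm. replace ((2 * a11 * q - (S + s)) * (2 * a22 * p - (S + s)) - 4 * p * q * zz)
        with (s * s - D) by (unfold S, D; ring). lra. }
    assert (0 < 4 * p * q) by nra.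
    apply Rmult_integral in H0. destruct H0; lra. }
  exists m. split.
  -
    destruct (Req_dec zz 0) as [z0|z0].
    + assert (zr : Cre z = 0) by (unfold zz in z0; nra).
      assert (zi : Cim z = 0) by (unfold zz in z0; nra).
      rewrite z0 in froot. apply Rmult_integral in froot. destruct froot as [f1|f2].
      * exists (hadd (hscal (RC 1) x) (hscal (RC 0) (L x))). split; [exists (RC 1), (RC 0); reflexivity|].
        split.
        -- intro e. apply nz. rewrite <- (hip_def H x); auto. apply (f_equal (fun w => hip w x)) in e.
           rewrite Ex3, hip_zero_l in e. apply (f_equal Cre) in e. simpl in e. fold p. lra.
        -- apply EigS; apply Ceq; simpl; rewrite ?zr, ?zi; nra.
      * exists (hadd (hscal (RC 0) x) (hscal (RC 1) (L x))). split; [exists (RC 0), (RC 1); reflexivity|].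
        split.
        -- intro e. apply Lnz0. rewrite <- (hip_def H (L x)); auto. apply (f_equal (fun w => hip w (L x))) in e.
           rewrite Ex4, hip_zero_l in e. apply (f_equal Cre) in e. simpl in e. fold q. lra.
        -- apply EigS; apply Ceq; simpl; rewrite ?zr, ?zi; nra.
    + exists (hadd (hscal (Cmult (RC (-1)) z) x) (hscal (RC (a11 - m * p)) (L x))).
      split; [do 2 eexists; reflexivity|]. split.
      * intro e. apply z0. apply (f_equal (fun w => hip w x)) in e.
        rewrite Ex3, hip_zero_l in e.
        pose proof (f_equal Cre e) as e1. pose proof (f_equal Cim e) as e2. simpl in e1, e2.
        assert (Cre z = 0) by nra. assert (Cim z = 0) by nra. unfold zz. nra.
      * apply EigS; apply Ceq; simpl; unfold zz in froot; nra.
  -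
    intros l [u [[ga [de ->]] [unz Hu]]].
    pose proof (Hu x Sx) as e1. pose proof (Hu (L x) SLx) as e2.
    rewrite Ex1, Ex3 in e1. rewrite Ex2, Ex4 in e2.
    set (g := (a11 - l * p) * (a22 - l * q) - zz).
    assert (g0 : g = 0).
    { destruct (Req_dec g 0) as [|gn]; auto. exfalso. apply unz.
      assert (E1 : Cplus (Cmult ga (RC (a11 - l * p))) (Cmult de z) = RC 0).
      { pose proof (f_equal Cre e1) as r1. pose proof (f_equal Cim e1) as i1.
        simpl in r1, i1. apply Ceq; simpl; nra. }
      assert (E2 : Cplus (Cmult ga (Cconj z)) (Cmult de (RC (a22 - l * q))) = RC 0).
      { pose proof (f_equal Cre e2) as r2. pose proof (f_equal Cim e2) as i2.
        simpl in r2, i2. apply Ceq; simpl; nra. }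
      assert (I1 : Cmult (RC g) ga = RC 0).
      { transitivity (Cplus (Cmult (RC (a22 - l * q)) (Cplus (Cmult ga (RC (a11 - l * p))) (Cmult de z)))
           (Cmult (Copp z) (Cplus (Cmult ga (Cconj z)) (Cmult de (RC (a22 - l * q)))))).
        - unfold g, zz. csolve.
        - rewrite E1, E2. csolve. }
      assert (I2 : Cmult (RC g) de = RC 0).
      { transitivity (Cplus (Cmult (RC (a11 - l * p)) (Cplus (Cmult ga (Cconj z)) (Cmult de (RC (a22 - l * q)))))
           (Cmult (Copp (Cconj z)) (Cplus (Cmult ga (RC (a11 - l * p))) (Cmult de z)))).
        - unfold g, zz. csolve.
        - rewrite E1, E2. csolve. }
      assert (ga = RC 0).
      { pose proof (f_equal Cre I1) as a1. pose proof (f_equal Cim I1) as a2. simpl in a1, a2.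
        apply Ceq; simpl; [apply (Rmult_eq_reg_l g)|apply (Rmult_eq_reg_l g)]; auto; lra. }
      assert (de = RC 0).
      { pose proof (f_equal Cre I2) as a1. pose proof (f_equal Cim I2) as a2. simpl in a1, a2.
        apply Ceq; simpl; [apply (Rmult_eq_reg_l g)|apply (Rmult_eq_reg_l g)]; auto; lra. }
      subst. vsolve. }
    set (T := 2 * p * q * l).
    assert (TS : (T - S) * (T - S) = D).
    { assert (hh : (T - S) * (T - S) - D = 4 * p * q * g) by (unfold T, S, D, g; ring).
      rewrite g0, Rmult_0_r in hh. lra. }
    assert (T - S <= s).
    { destruct (Rle_dec (T - S) s); auto. exfalso. nra. }
    assert (hl : 2 * p * q * l <= 2 * p * q * m) by (fold T; lra).
    apply Rmult_le_reg_l in hl; auto. nra.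
Qed.
End Eig.

Lemma hnorm_triangle {H : Hilbert} (a b : H) : hnorm (hadd a b) <= hnorm a + hnorm b.
Proof.
  pose proof (hnorm_nonneg a) as na. pose proof (hnorm_nonneg b) as nb.
  pose proof (hnorm_nonneg (hadd a b)) as nab.
  assert (h : nsq (hadd a b) <= (hnorm a + hnorm b) * (hnorm a + hnorm b)).
  { assert (e : nsq (hadd a b) = nsq a + 2 * Cre (hip a b) + nsq b).
    { unfold nsq. ipexp. simpl. rewrite (hip_re_sym a b). ring. }
    rewrite e. pose proof (CS_re a b) as cs. rewrite <- (hnorm_sq a), <- (hnorm_sq b) in cs.
    assert (Cre (hip a b) <= hnorm a * hnorm b).
    { destruct (Rle_dec (Cre (hip a b)) 0). nra.
      assert (0 <= hnorm a * hnorm b) by nra. nra. }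
    rewrite <- (hnorm_sq a), <- (hnorm_sq b). nra. }
  rewrite <- hnorm_sq in h. nra.
Qed.

Lemma hnorm_scal {H : Hilbert} (r : R) (x : H) : hnorm (hscal (RC r) x) = Rabs r * hnorm x.
Proof.
  unfold hnorm. fold (nsq (hscal (RC r) x)). fold (nsq x). rewrite nsq_scal.
  rewrite sqrt_mult_alt by nra. rewrite <- sqrt_Rsqr_abs. reflexivity.
Qed.

Lemma Cmod_le {H : Hilbert} (v w : H) : nsq v = 1 -> Cmod (hip v w) <= hnorm w.
Proof.
  intro h1. pose proof (CS_mod v w) as cs. rewrite h1, Rmult_1_l in cs.
  unfold Cmod, hnorm. apply sqrt_le_1_alt. simpl. fold (nsq w). lra.
Qed.

Lemma span0 {H : Hilbert} (l : list H) : span l hzero.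
Proof.
  exists (map (fun _ => RC 0) l). split. apply length_map.
  induction l as [|e l IH]; simpl; auto. rewrite <- IH, hscal0, hadd_0. reflexivity.
Qed.

Lemma span_D {H : Hilbert} (D : H -> Prop) (l : list H) v :
  is_subspace D -> Forall D l -> span l v -> D v.
Proof.
  intros HD Hl [cs [hlen ->]]. revert cs hlen. induction Hl as [|e l He Hl IH]; intros cs hlen.
  - destruct cs; simpl; apply sub0; auto.
  - destruct cs as [|c cs]; simpl in *; [discriminate|].
    apply sub_add; auto. apply sub_scal; auto.
Qed.

Lemma Rbar_le_trans x y z : Rbar_le x y -> Rbar_le y z -> Rbar_le x z.
Proof. destruct x, y, z; simpl; intros; auto; try lra; contradiction. Qed.

Lemma Rbar_le_PInf x : Rbar_le x PInf.
Proof. destruct x; simpl; auto. Qed.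

Lemma sup_exists (S : Rbar -> Prop) : exists l, is_sup_Rbar S l.
Proof.
  destruct (classic (S PInf)) as [hp|hp].
  { exists PInf. split. intros; apply Rbar_le_PInf.
    intros b hb. apply hb in hp. destruct b; simpl in *; auto. }
  set (SR := fun r => S (Fin r)).
  destruct (classic (exists r, SR r)) as [ne|em].
  - destruct (classic (bound SR)) as [bd|ubd].
    + destruct (completeness SR bd ne) as [m [hub hlub]].
      exists (Fin m). split.
      * intros x hx. destruct x as [r| |]; simpl; [apply hub; auto | contradiction | auto].
      * intros b hb. destruct ne as [r hr]. destruct b; simpl.
        -- apply hlub. intros x hx. apply (hb (Fin x)); auto.
        -- auto.
        -- apply (hb (Fin r)); auto.
    + exists PInf. split. intros; apply Rbar_le_PInf.
      intros b hb. destruct b; simpl; auto.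
      * apply ubd. exists r. intros x hx. apply (hb (Fin x)); auto.
      * destruct ne as [r hr]. apply (hb (Fin r)); auto.
  - exists MInf. split.
    + intros x hx. destruct x; simpl; auto. apply em; exists r; auto.
    + intros b hb; destruct b; simpl; auto.
Qed.

Definition Rbar_opp (x : Rbar) : Rbar :=
  match x with Fin r => Fin (- r) | PInf => MInf | MInf => PInf end.

Lemma Rbar_opp_le x y : Rbar_le (Rbar_opp x) (Rbar_opp y) <-> Rbar_le y x.
Proof. destruct x, y; simpl; split; intros; auto; lra. Qed.

Lemma Rbar_opp_opp x : Rbar_opp (Rbar_opp x) = x.
Proof. destruct x; simpl; auto. rewrite Ropp_involutive; auto. Qed.

Lemma inf_exists (S : Rbar -> Prop) : exists l, is_inf_Rbar S l.
Proof.
  destruct (sup_exists (fun x => S (Rbar_opp x))) as [l [h1 h2]].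
  exists (Rbar_opp l). split.
  - intros x hx. apply Rbar_opp_le. rewrite Rbar_opp_opp. apply h1. rewrite Rbar_opp_opp; auto.
  - intros b hb. rewrite <- (Rbar_opp_opp b). apply Rbar_opp_le. apply h2.
    intros x hx. rewrite <- (Rbar_opp_opp x). apply Rbar_opp_le. apply hb; auto.
Qed.

Lemma liminf_exists (u : nat -> R) : exists l, is_liminf u l.
Proof.
  assert (forall N, exists l, is_inf_Rbar (fun y => exists n, (N <= n)%nat /\ y = Fin (u n)) l)
    by (intro; apply inf_exists).
  apply choice in H. destruct H as [f hf].
  destruct (sup_exists (fun y => exists N, y = f N)) as [l hl].
  exists l, f. auto.
Qed.

Lemma limsup_exists (u : nat -> R) : exists l, is_limsup u l.
Proof.
  assert (forall N, exists l, is_sup_Rbar (fun y => exists n, (N <= n)%nat /\ y = Fin (u n)) l)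
    by (intro; apply sup_exists).
  apply choice in H. destruct H as [f hf].
  destruct (inf_exists (fun y => exists N, y = f N)) as [l hl].
  exists l, f. auto.
Qed.

Lemma liminf_le (u : nat -> R) (r : R) l :
  (forall N, exists n, (N <= n)%nat /\ u n <= r) -> is_liminf u l -> Rbar_le l (Fin r).
Proof.
  intros hf [f [hinf [_ hlub]]]. apply hlub. intros y [N ->].
  destruct (hf N) as [n [hn hu]]. destruct (hinf N) as [hlb _].
  apply Rbar_le_trans with (Fin (u n)). apply hlb. exists n; auto. simpl; auto.
Qed.

Lemma limsup_le (u : nat -> R) (r : R) l N0 :
  (forall n, (N0 <= n)%nat -> u n <= r) -> is_limsup u l -> Rbar_le l (Fin r).
Proof.
  intros hf [f [hsup [hlb _]]]. apply Rbar_le_trans with (f N0).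
  apply hlb. exists N0; auto.
  destruct (hsup N0) as [_ hl]. apply hl. intros y [n [hn ->]]. simpl. auto.
Qed.

Section Eig2.
Variable H : Hilbert.
Variables DA DL : H -> Prop.
Variables A L P : H -> H.
Hypothesis hDA : is_subspace DA.
Hypothesis hAlin : linear_on DA A.
Hypothesis Asym : forall p q, DA p -> DA q -> hip (A p) q = hip p (A q).
Hypothesis hDL : is_subspace DL.
Hypothesis hLlin : linear_on DL L.
Hypothesis hDLA : forall x, DL x -> DA x.
Hypothesis hLDLA : forall x, DL x -> DA (L x).

Lemma x_nz mu mu' x y :
  (forall z, DL z -> Cre (hip (A (L z)) (L z)) <= mu' * nsq (L z)) -> mu' < mu ->
  DL x -> DL y ->
  Eig H A (hadd x (L y)) mu x -> Eig H A (hadd x (L y)) mu (L x) -> Eig H A (hadd x (L y)) mu (L y) ->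
  hadd x (L y) <> hzero -> x <> hzero.
Proof.
  intros KEY hmu hx hy e1 e2 e3 vnz ex.
  pose proof (eig_core H DA DL A L hDA hAlin Asym hDL hLlin hDLA hLDLA mu mu' x y KEY hx hy e1 e2 e3 (RC 1) (RC 0)) as hc.
  assert (L0 : L hzero = hzero) by (apply (lin0 DL); auto).
  rewrite ex, L0 in hc.
  assert (E0 : hadd (hscal (RC 1) (@hzero H)) (hscal (RC 0) hzero) = hzero) by vsolve.
  rewrite E0 in hc. unfold Qf in hc. rewrite hip_zero_r, nsq_zero_eq in hc. simpl in hc.
  set (r := hadd (hscal (RC 0) hzero) (hscal (Cmult (RC (-1)) (RC 1)) (L y))) in *.
  pose proof (nsq_nonneg r).
  assert (nsq r = 0) by nra.
  apply nsq_zero in H1.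
  apply vnz. rewrite ex.
  assert (E : hadd hzero (L y) = hscal (RC (-1)) r) by (unfold r; vsolve).
  rewrite E, H1. vsolve.
Qed.
End Eig2.

Lemma small_inv (r : R) : 0 < r -> exists J, forall j, (J <= j)%nat -> / (INR j + 1) < r.
Proof.
  intro hr. destruct (INR_unbounded (/ r)) as [n hn]. exists n. intros j hj.
  apply le_INR in hj. pose proof (pos_INR n).
  assert (hpos : 0 < / r) by (apply Rinv_0_lt_compat; auto).
  rewrite <- (Rinv_inv r). apply Rinv_lt_contravar; [|lra].
  apply Rmult_lt_0_compat; lra.
Qed.

Lemma Cmod_scal (r : R) (z : CC) : Cmod (Cmult (RC r) z) = Rabs r * Cmod z.
Proof.
  unfold Cmod. simpl. rewrite <- sqrt_Rsqr_abs. rewrite <- sqrt_mult_alt by (unfold Rsqr; nra).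
  f_equal. unfold Rsqr. ring.
Qed.

Lemma Rbar_lt_min r y z : Rbar_lt (Fin r) (Rbar_min y z) -> Rbar_lt (Fin r) y /\ Rbar_lt (Fin r) z.
Proof.
  unfold Rbar_lt. destruct y as [a| |], z as [c| |]; simpl; intros [h1 h2].
  - assert (hr : r < Rmin a c) by (destruct h1; auto; subst; congruence).
    pose proof (Rmin_l a c). pose proof (Rmin_r a c).
    repeat split; try lra; intro e; injection e; lra.
  - repeat split; auto; discriminate.
  - contradiction.
  - repeat split; auto; discriminate.
  - repeat split; auto; discriminate.
  - contradiction.
  - contradiction.
  - contradiction.
  - contradiction.
Qed.

Lemma Rbar_lt_of l r s b : Rbar_le l (Fin r) -> r < s -> Rbar_le (Fin s) b -> Rbar_lt l b.
Proof.
  unfold Rbar_lt. destruct l as [a| |], b as [c| |]; simpl; intros h1 h2 h3; try contradiction;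
    split; try discriminate; try lra; auto.
  intro e; injection e; intro; subst. lra.
Qed.

Lemma le_sqrt_sum (a b : R) : 0 <= a -> a <= sqrt (a ^ 2 + b ^ 2).
Proof.
  intro ha. rewrite <- (sqrt_square a) at 1 by auto. apply sqrt_le_1_alt. simpl. nra.
Qed.

Theorem mainTheorem13
  (H : Hilbert) (DA : H -> Prop) (A : H -> H) (P : H -> H)
  (DL : H -> Prop) (L : H -> H)
  (* A self-adjoint with dense domain D(A) *)
  (hDA : is_subspace DA) (hAlin : linear_on DA A)
  (hDAdense : dense_in (fun _ => True) DA)
  (hAsa : selfadjoint_in (fun _ => True) (graph DA A))
  (* P an orthogonal projector *)
  (hPlin : linear_on (fun _ => True) P)
  (hPP : forall x, P (P x) = P x)
  (hPsym : forall x y, hip (P x) y = hip x (P y))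
  (* L : D(L) subset PH -> (1-P)H, linear and injective *)
  (hDL : is_subspace DL) (hLlin : linear_on DL L)
  (hDLP : forall x, DL x -> P x = x)
  (hLP : forall x, DL x -> P (L x) = hzero)
  (hLinj : forall x y, DL x -> DL y -> L x = L y -> x = y)
  (* D(L) (+) L D(L) subset D(A) is a core for A *)
  (hDLA : forall x, DL x -> DA x) (hLDLA : forall x, DL x -> DA (L x))
  (hcore : graph_dense DA A (fun u => exists x y, DL x /\ DL y /\ u = hadd x (L y)))
  (* PAP essentially self-adjoint on D(L) (in PH) *)
  (hPAP : ess_selfadjoint_in (fun x => P x = x) (graph DL (fun x => P (A (P x)))))
  (* (1-P)A(1-P) essentially self-adjoint on L D(L) (in (1-P)H) *)
  (hQAQ : ess_selfadjoint_in (fun x => P x = hzero)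
            (graph (fun y => exists w, DL w /\ y = L w)
                   (fun y => hsub (A (hsub y (P y))) (P (A (hsub y (P y)))))))
  (* d = sup of the spectrum of A_{|(1-P)H}, finite *)
  (d : R)
  (hd : is_lub (spectrum_in (fun x => P x = hzero)
                 (rel_closure
                   (graph (fun y => exists w, DL w /\ y = L w)
                          (fun y => hsub (A (hsub y (P y))) (P (A (hsub y (P y))))))))
               d) :
  (* (i) *)
  (forall m2'' : R,
     is_glb (fun m => exists x, DL x /\ x <> hzero /\ is_mu2 A L x m) m2'' ->
     d < m2'' ->
     forall lam, Spu DA A P DL L lam -> ~ (d < lam < m2''))
  /\
  (* (ii) *)
  (forall m2' : Rbar,
     is_inf_Rbar
       (fun y => exists (xs : nat -> H) (mus : nat -> R),
          (forall n, DL (xs n) /\ xs n <> hzero /\ hnorm (xs n) = 1 /\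
                     is_mu2 A L (xs n) (mus n)) /\
          weak_to0 xs /\ is_liminf mus y) m2' ->
     Rbar_lt (Fin d) m2' ->
     forall b : Rbar, Rbar_lt (Fin d) b ->
     (forall (xs : nat -> H) (mus : nat -> R),
        (forall n, DL (xs n) /\ xs n <> hzero /\ is_mu2 A L (xs n) (mus n)) ->
        strong_to0 xs ->
        (exists l, is_limsup mus l /\ Rbar_lt l b) ->
        Un_cv (fun n => Cmod (hip (A (xs n)) (xs n))) 0) ->
     forall lam, Spu DA A P DL L lam ->
       ~ (d < lam /\ Rbar_lt (Fin lam) (Rbar_min m2' b))).
Proof.
  assert (Asym : forall p q, DA p -> DA q -> hip (A p) q = hip p (A q)).
  { destruct hAsa as [_ [_ hsa]]. intros p q hp hq.
    assert (g : graph DA A q (A q)) by (split; auto).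
    apply hsa in g. destruct g as [_ [_ g]]. apply g. split; auto. }
  pose proof (key_inst A P L DL d hPlin hPsym hLP hQAQ hd) as KEY.
  assert (L0 : L hzero = hzero) by (apply (lin0 DL); auto).
  assert (SEQ : forall lam, Spu DA A P DL L lam -> forall e : nat -> R, (forall k, 0 < e k) ->
    exists (W : nat -> H -> Prop) (n : nat -> nat) (mu : nat -> R) (x y : nat -> H),
      graph_dense DA A (fun u => exists N, W N u) /\
      (forall N w, W N w -> forall m, (N <= m)%nat -> W m w) /\
      (forall N w, W N w -> DA w) /\
      forall k, (k <= n k)%nat /\ DL (x k) /\ DL (y k) /\ nsq (hadd (x k) (L (y k))) = 1 /\
        Eig H A (hadd (x k) (L (y k))) (mu k) (x k) /\
        Eig H A (hadd (x k) (L (y k))) (mu k) (L (x k)) /\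
        Eig H A (hadd (x k) (L (y k))) (mu k) (L (y k)) /\
        (forall w, W (n k) w -> Eig H A (hadd (x k) (L (y k))) (mu k) w) /\
        Rabs (lam - mu k) < e k).
  { intros lam Hspu e epos.
    destruct Hspu as [vs Hvs]. cbv zeta in Hvs.
    destruct Hvs as [HDLv [Hmono [Hdense [Hconv _]]]].
    set (W := fun n u => exists u1 u2, span (vs n) u1 /\ span (vs n) u2 /\ u = hadd u1 (L u2)).
    assert (WDL : forall N u, span (vs N) u -> DL u) by (intros; eapply span_D; eauto).
    assert (WDA : forall N w, W N w -> DA w).
    { intros N w [u1 [u2 [h1 [h2 ->]]]]. apply sub_add; auto. apply hDLA; eauto. apply hLDLA; eauto. }
    assert (Wmono : forall N w, W N w -> forall m, (N <= m)%nat -> W m w).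
    { intros N w hw m hm. induction hm; auto.
      destruct IHhm as [u1 [u2 [h1 [h2 ->]]]]. exists u1, u2; split; [|split]; auto. }
    assert (PT : forall k, exists t : nat * R * H * H,
      let '(n, mu, x, y) := t in
        (k <= n)%nat /\ DL x /\ DL y /\ nsq (hadd x (L y)) = 1 /\
        Eig H A (hadd x (L y)) mu x /\
        Eig H A (hadd x (L y)) mu (L x) /\
        Eig H A (hadd x (L y)) mu (L y) /\
        (forall w, W n w -> Eig H A (hadd x (L y)) mu w) /\
        Rabs (lam - mu) < e k).
    { intro k. destruct (Hconv (e k) (epos k)) as [N HN].
      destruct (HN (N + k)%nat ltac:(lia)) as [mu [[v [[u1 [u2 [h1 [h2 ev]]]] [vnz Hv]]] hmu]].
      fold W in Hv.
      assert (d1 : DL u1) by eauto. assert (d2 : DL u2) by eauto.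
      assert (hvA : DA v) by (rewrite ev; apply sub_add; auto).
      set (r := / hnorm v).
      assert (hn : 0 < hnorm v).
      { pose proof (nsq_pos v vnz). unfold hnorm. apply sqrt_lt_R0. auto. }
      exists ((N + k)%nat, mu, hscal (RC r) u1, hscal (RC r) u2).
      assert (Ev : hadd (hscal (RC r) u1) (L (hscal (RC r) u2)) = hscal (RC r) v).
      { rewrite (lin_scal DL); auto. rewrite ev. vsolve. }
      rewrite Ev.
      assert (EW : forall w, W (N + k)%nat w -> Eig H A (hscal (RC r) v) mu w).
      { intros w hw. apply (Eig_v H DA A hAlin); auto. apply Hv; auto. }
      assert (W1 : W (N + k)%nat u1).
      { exists u1, hzero. split; auto. split. apply span0. rewrite L0. vsolve. }
      assert (W2 : W (N + k)%nat (L u1)).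
      { exists hzero, u1. split. apply span0. split; auto. vsolve. }
      assert (W3 : W (N + k)%nat (L u2)).
      { exists hzero, u2. split. apply span0. split; auto. vsolve. }
      split; [lia|]. split; [apply sub_scal; auto|]. split; [apply sub_scal; auto|].
      split.
      { rewrite nsq_scal. rewrite <- hnorm_sq. unfold r. field. lra. }
      rewrite !(lin_scal DL L); auto.
      split; [apply Eig_scal; auto|]. split; [apply Eig_scal; auto|].
      split; [apply Eig_scal; auto|]. split; auto. }
    apply choice in PT. destruct PT as [f hf].
    exists W, (fun k => fst (fst (fst (f k)))), (fun k => snd (fst (fst (f k)))),
      (fun k => snd (fst (f k))), (fun k => snd (f k)).
    split. { intros x0 hx0 eps heps. destruct (Hdense x0 hx0 eps heps) as [u [[N hu] hh]].
             exists u; split; auto. exists N; auto. }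
    split; auto. split; auto.
    intro k. specialize (hf k). destruct (f k) as [[[n mu] x] y]. simpl. exact hf. }
  split.
  { intros m2'' hglb hdm lam Hspu [h1 h2].
    set (eps0 := Rmin (lam - d) (m2'' - lam) / 2).
    assert (e0 : 0 < eps0) by (unfold eps0; apply Rmin_case; lra).
    destruct (SEQ lam Hspu (fun _ => eps0) (fun _ => e0)) as [W [n [mu [x [y [_ [_ [_ hk]]]]]]]].
    destruct (hk 0%nat) as [_ [dx [dy [n1 [e1 [e2 [e3 [_ hmu]]]]]]]].
    set (mu0 := mu 0%nat) in *. set (x0 := x 0%nat) in *. set (y0 := y 0%nat) in *.
    assert (b1 : eps0 <= (lam - d) / 2) by (unfold eps0; pose proof (Rmin_l (lam - d) (m2'' - lam)); lra).
    assert (b2 : eps0 <= (m2'' - lam) / 2) by (unfold eps0; pose proof (Rmin_r (lam - d) (m2'' - lam)); lra).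
    apply Rabs_def2 in hmu. destruct hmu as [hm1 hm2].
    set (mu' := (d + mu0) / 2).
    assert (hmu' : mu' > d) by (unfold mu'; lra).
    pose proof (KEY mu' hmu') as K'.
    assert (vnz : hadd x0 (L y0) <> hzero).
    { intro e. rewrite e, nsq_zero_eq in n1. lra. }
    assert (xnz : x0 <> hzero).
    { apply (x_nz H DA DL A L hDA hAlin Asym hDL hLlin hDLA hLDLA mu0 mu' x0 y0); auto. unfold mu'; lra. }
    destruct (mu2_exists H DA DL A L P hAlin Asym hDL hLlin hDLA hLDLA hPsym hDLP hLP hLinj x0 dx xnz)
      as [m2 [hfs hmax]].
    assert (m2le : m2 <= mu0).
    { apply (eig_bound H DA DL A L hDA hAlin Asym hDL hLlin hDLA hLDLA mu0 mu' x0 y0 (RC 1) m2); auto.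
      unfold mu'; lra. rewrite hscal_1; auto. }
    destruct hglb as [hlb _].
    assert (m2'' <= m2) by (apply hlb; exists x0; split; auto; split; auto; split; auto).
    lra. }
  intros m2' hinf hdm2 b hdb hb lam Hspu [h1 h2].
  apply Rbar_lt_min in h2. destruct h2 as [hlm hlb].
  set (bnum := match b with Fin r => r | _ => lam + 1 end).
  assert (hbn : lam < bnum /\ Rbar_le (Fin bnum) b).
  { unfold bnum. destruct b as [r| |]; simpl in *; destruct hlb as [l1 l2].
    - split; [destruct l1 as [l1|l1]; auto; subst; congruence | lra].
    - split; [lra|auto].
    - contradiction. }
  destruct hbn as [hbn1 hbn2].
  set (ga := Rmin ((lam - d) / 4) ((bnum - lam) / 2)).
  assert (gapos : 0 < ga) by (unfold ga; apply Rmin_case; lra).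
  assert (ga1 : ga <= (lam - d) / 4) by apply Rmin_l.
  assert (ga2 : ga <= (bnum - lam) / 2) by apply Rmin_r.
  set (e := fun k : nat => ga / (INR k + 1)).
  assert (epos : forall k, 0 < e k).
  { intro k. unfold e. apply Rdiv_lt_0_compat; auto. pose proof (pos_INR k); lra. }
  assert (ele : forall k, e k <= ga).
  { intro k. unfold e. pose proof (pos_INR k). unfold Rdiv.
    rewrite <- (Rmult_1_r ga) at 2. apply Rmult_le_compat_l; [lra|].
    rewrite <- Rinv_1. apply Rinv_le_contravar; lra. }
  destruct (SEQ lam Hspu e epos) as [W [n [mu [x [y [Hdense [Wmono [WDA hk]]]]]]]].
  set (mu' := (d + lam) / 2).
  assert (hmu' : mu' > d) by (unfold mu'; lra).
  pose proof (KEY mu' hmu') as K'.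
  assert (mub : forall k, lam - e k < mu k < lam + e k).
  { intro k. destruct (hk k) as [_ [_ [_ [_ [_ [_ [_ [_ hm]]]]]]]]. apply Rabs_def2 in hm. lra. }
  assert (mugt : forall k, mu' + ga <= mu k).
  { intro k. pose proof (mub k). pose proof (ele k). unfold mu'. lra. }
  assert (xnz : forall k, x k <> hzero).
  { intro k. destruct (hk k) as [_ [dx [dy [n1 [e1 [e2 [e3 _]]]]]]].
    apply (x_nz H DA DL A L hDA hAlin Asym hDL hLlin hDLA hLDLA (mu k) mu' (x k) (y k)); auto.
    pose proof (mugt k); lra.
    intro ee. rewrite ee, nsq_zero_eq in n1. lra. }
  assert (mubd : forall k c m, fin_spectrum A (span2 (hscal c (x k)) (L (hscal c (x k)))) m -> m <= mu k).
  { intros k c m hf. destruct (hk k) as [_ [dx [dy [n1 [e1 [e2 [e3 _]]]]]]].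
    apply (eig_bound H DA DL A L hDA hAlin Asym hDL hLlin hDLA hLDLA (mu k) mu' (x k) (y k) c m); auto.
    pose proof (mugt k); lra. }
  assert (WV : forall psi eps, eps > 0 -> exists K, forall k, (K <= k)%nat ->
             Cmod (hip (hadd (x k) (L (y k))) psi) < eps).
  { intros psi eps heps.
    destruct Hspu as [vs Hvs]. cbv zeta in Hvs. destruct Hvs as [_ [_ [_ [_ Hres]]]].
    destruct (NNPP _ Hres) as [c0 [surj _]].
    destruct (surj psi I) as [phi [dphi ephi]].
    set (eta := Rmin 1 (eps / (4 * (1 + Rabs lam)))).
    pose proof (Rabs_pos lam) as al.
    assert (etapos : 0 < eta) by (unfold eta; apply Rmin_case; [lra|apply Rdiv_lt_0_compat; lra]).
    assert (eta1 : eta <= 1) by apply Rmin_l.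
    assert (eta2 : eta * (1 + Rabs lam) <= eps / 4).
    { assert (eta <= eps / (4 * (1 + Rabs lam))) by apply Rmin_r.
      apply (Rmult_le_compat_r (1 + Rabs lam)) in H0; [|lra].
      replace (eps / (4 * (1 + Rabs lam)) * (1 + Rabs lam)) with (eps / 4) in H0 by (field; lra). lra. }
    destruct (Hdense phi dphi eta etapos) as [u [[N hu] hun]].
    assert (hn1 : hnorm (hsub u phi) < eta).
    { eapply Rle_lt_trans; [|exact hun]. apply le_sqrt_sum. apply hnorm_nonneg. }
    assert (hn2 : hnorm (hsub (A u) (A phi)) < eta).
    { eapply Rle_lt_trans; [|exact hun]. rewrite Rplus_comm. apply le_sqrt_sum. apply hnorm_nonneg. }
    set (hp := hnorm phi). pose proof (hnorm_nonneg phi) as hpn. fold hp in hpn.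
    assert (q0 : 0 < eps / (2 * (ga * (hp + 1) + 1))).
    { apply Rdiv_lt_0_compat; auto. nra. }
    destruct (small_inv _ q0) as [J hJ].
    exists (Nat.max N J). intros k hkk.
    destruct (hk k) as [hnk [dx [dy [n1 [_ [_ [_ [EW _]]]]]]]].
    set (v := hadd (x k) (L (y k))) in *.
    assert (dv : DA v) by (apply sub_add; auto).
    assert (uW : W (n k) u) by (apply (Wmono N); auto; lia).
    assert (du : DA u) by (eapply WDA; eauto).
    pose proof (EW u uW) as Eu. unfold Eig in Eu.
    assert (hvAu : hip v (A u) = Cmult (RC (mu k)) (hip v u)).
    { rewrite (hip_conj H (A u) v), (Asym u v), <- (hip_conj H u (A v)), Eu; auto.
      }
    assert (psieq : psi = hsub (A phi) (hscal (RC lam) phi)) by (rewrite <- ephi; vsolve).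
    set (wt := hadd (hsub (A phi) (A u)) (hadd (hscal (RC lam) (hsub u phi)) (hscal (RC (mu k - lam)) u))).
    assert (Ew : hip v psi = hip v wt).
    { rewrite psieq. unfold wt. ipexp. rewrite hvAu. csolve. }
    rewrite Ew. eapply Rle_lt_trans; [apply Cmod_le; auto|].
    assert (t1 : hnorm (hsub (A phi) (A u)) < eta).
    { assert (ee : hsub (A phi) (A u) = hscal (RC (-1)) (hsub (A u) (A phi))) by vsolve.
      rewrite ee, hnorm_scal. assert (ra : Rabs (-1) = 1) by (rewrite Rabs_left; lra). rewrite ra. lra. }
    assert (t2 : hnorm u <= hp + 1).
    { assert (ee : u = hadd phi (hsub u phi)) by vsolve.
      rewrite ee at 1. pose proof (hnorm_triangle phi (hsub u phi)). unfold hp. lra. }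
    pose proof (mub k) as mk.
    assert (t3 : Rabs (mu k - lam) < e k) by (apply Rabs_def1; lra).
    pose proof (Rabs_pos (mu k - lam)).
    assert (t4 : e k * (hp + 1) < eps / 2).
    { unfold e. pose proof (hJ k ltac:(lia)) as hj.
      pose proof (pos_INR k).
      assert (ga / (INR k + 1) * (hp + 1) = ga * (hp + 1) * / (INR k + 1)) by (field; lra).
      rewrite H2.
      assert (ga * (hp + 1) * / (INR k + 1) <= ga * (hp + 1) * (eps / (2 * (ga * (hp + 1) + 1)))).
      { apply Rmult_le_compat_l; [nra|lra]. }
      assert (ga * (hp + 1) * (eps / (2 * (ga * (hp + 1) + 1))) < eps / 2).
      { apply (Rmult_lt_reg_r (2 * (ga * (hp + 1) + 1))); [nra|].
        field_simplify; nra. }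
      lra. }
    unfold wt. eapply Rle_lt_trans; [apply hnorm_triangle|].
    eapply Rle_lt_trans; [apply Rplus_le_compat_l, hnorm_triangle|].
    rewrite !hnorm_scal.
    assert (Rabs lam * hnorm (hsub u phi) <= Rabs lam * eta) by (apply Rmult_le_compat_l; lra).
    assert (Rabs (mu k - lam) * hnorm u <= e k * (hp + 1)).
    { apply Rmult_le_compat; try lra. apply hnorm_nonneg. }
    lra. }
  assert (WX : forall psi eps, eps > 0 -> exists K, forall k, (K <= k)%nat -> Cmod (hip (x k) psi) < eps).
  { intros psi eps heps. destruct (WV (P psi) eps heps) as [K hK]. exists K. intros k hkk.
    destruct (hk k) as [_ [dx [dy _]]].
    assert (Pv : P (hadd (x k) (L (y k))) = x k).
    { rewrite (lin_add (fun _ => True)); auto. rewrite hDLP, hLP; auto. apply hadd_0. }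
    rewrite <- Pv, hPsym. apply hK; auto. }
  destruct (classic (forall eps, eps > 0 -> forall N, exists k, (N <= k)%nat /\ nsq (x k) < eps)) as [CA|CB].
  - assert (SUB : forall j, exists k, (j <= k)%nat /\ nsq (x k) < / (INR j + 1)).
    { intro j. apply CA. pose proof (pos_INR j). apply Rinv_0_lt_compat. lra. }
    apply choice in SUB. destruct SUB as [kj hkj].
    set (xs := fun j => x (kj j)).
    assert (MU : forall j, exists m, is_mu2 A L (xs j) m).
    { intro j. destruct (hk (kj j)) as [_ [dx _]].
      apply (mu2_exists H DA DL A L P hAlin Asym hDL hLlin hDLA hLDLA hPsym hDLP hLP hLinj); auto. apply xnz. }
    apply choice in MU. destruct MU as [mus hmus].
    assert (musle : forall j, mus j <= mu (kj j)).
    { intro j. destruct (hmus j) as [hf _]. apply (mubd (kj j) (RC 1)). rewrite hscal_1. exact hf. }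
    assert (Lim : Un_cv (fun j => Cmod (hip (A (xs j)) (xs j))) 0).
    { apply (hb xs mus).
      - intro j. destruct (hk (kj j)) as [_ [dx _]]. split; auto. split; auto. apply xnz.
      - intros eps heps. destruct (small_inv (eps * eps)) as [J hJ]; [nra|].
        exists J. intros j hj. unfold R_dist. rewrite Rminus_0_r.
        rewrite Rabs_pos_eq by apply hnorm_nonneg.
        destruct (hkj j) as [_ hx]. pose proof (hJ j hj).
        unfold hnorm. rewrite <- (sqrt_square eps) by lra.
        apply sqrt_lt_1_alt. split; [apply nsq_nonneg|]. fold (nsq (xs j)). unfold xs. lra.
      - destruct (limsup_exists mus) as [l hl]. exists l. split; auto.
        apply Rbar_lt_of with (r := lam + ga) (s := bnum); auto; [|lra].
        apply (limsup_le mus (lam + ga) l 0%nat); auto. intros j _.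
        pose proof (musle j). pose proof (mub (kj j)). pose proof (ele (kj j)). lra. }
    set (t := Rmin (1 / 2) (ga / (4 * (Rabs lam + ga)))).
    pose proof (Rabs_pos lam) as al.
    assert (tpos : 0 < t) by (unfold t; apply Rmin_case; [lra|apply Rdiv_lt_0_compat; lra]).
    assert (t1 : t <= 1 / 2) by apply Rmin_l.
    assert (t2 : t * (Rabs lam + ga) <= ga / 4).
    { assert (t <= ga / (4 * (Rabs lam + ga))) by apply Rmin_r.
      apply (Rmult_le_compat_r (Rabs lam + ga)) in H0; [|lra].
      replace (ga / (4 * (Rabs lam + ga)) * (Rabs lam + ga)) with (ga / 4) in H0 by (field; lra). lra. }
    assert (g4 : ga / 4 > 0) by lra.
    destruct (Lim (ga / 4) g4) as [J1 hJ1].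
    destruct (small_inv t tpos) as [J2 hJ2].
    set (j := Nat.max J1 J2).
    pose proof (hJ1 j ltac:(lia)) as c1. unfold R_dist in c1. rewrite Rminus_0_r in c1.
    rewrite Rabs_pos_eq in c1 by apply Cmod_nonneg.
    pose proof (hJ2 j ltac:(lia)) as c2.
    destruct (hkj j) as [_ c3].
    unfold xs in c1. set (k := kj j) in *.
    destruct (hk k) as [_ [dx [dy [n1 [e1 [e2 [e3 _]]]]]]].
    pose proof (eig_core H DA DL A L hDA hAlin Asym hDL hLlin hDLA hLDLA (mu k) mu' (x k) (y k) K' dx dy e1 e2 e3 (RC 1) (RC 0)) as hc.
    assert (E1 : hadd (hscal (RC 1) (x k)) (hscal (RC 0) (L (x k))) = x k) by vsolve.
    assert (E2 : hadd (hscal (RC 0) (L (x k))) (hscal (Cmult (RC (-1)) (RC 1)) (L (y k))) = hscal (RC (-1)) (L (y k))) by vsolve.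
    rewrite E1, E2, nsq_scal in hc. unfold Qf in hc.
    rewrite (nsq_orth H DL L P hPsym hDLP hLP) in n1; auto.
    pose proof (Cre_le_Cmod (hip (A (x k)) (x k))) as cr. apply Rabs_le_between in cr.
    pose proof (nsq_nonneg (x k)) as nx.
    assert (nxt : nsq (x k) < t) by lra.
    pose proof (mub k). pose proof (ele k). pose proof (mugt k).
    assert (m1 : mu k <= Rabs lam + ga) by (pose proof (Rle_abs lam); lra).
    assert (m2 : mu k * nsq (x k) <= (Rabs lam + ga) * nsq (x k)) by (apply Rmult_le_compat_r; lra).
    assert (m3 : (Rabs lam + ga) * nsq (x k) <= ga / 4).
    { assert ((Rabs lam + ga) * nsq (x k) <= (Rabs lam + ga) * t) by (apply Rmult_le_compat_l; lra). lra. }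
    assert (m4 : (mu' - mu k) * (-1 * -1 * nsq (L (y k))) <= - ga * (1 - nsq (x k))).
    { replace (-1 * -1 * nsq (L (y k))) with (1 - nsq (x k)) by lra.
      apply Rmult_le_compat_r; lra. }
    assert (m5 : - ga * (1 - nsq (x k)) <= - ga / 2).
    { assert (ga * (1/2) <= ga * (1 - nsq (x k))) by (apply Rmult_le_compat_l; lra). lra. }
    lra.
  - assert (EX : exists eps, eps > 0 /\ exists N, forall k, (N <= k)%nat -> eps <= nsq (x k)).
    { apply NNPP. intro hn. apply CB. intros eps heps N. apply NNPP. intro hn2. apply hn.
      exists eps. split; auto. exists N. intros k hk'. apply Rnot_lt_le. intro hl. apply hn2. exists k; auto. }
    destruct EX as [eps0 [e0pos [N0 hN0]]].
    assert (hxn : forall j, sqrt eps0 <= hnorm (x (N0 + j)%nat)).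
    { intro j. unfold hnorm. apply sqrt_le_1_alt. apply hN0. lia. }
    assert (se0 : 0 < sqrt eps0) by (apply sqrt_lt_R0; lra).
    set (cx := fun j => / hnorm (x (N0 + j)%nat)).
    assert (cxp : forall j, 0 < cx j) by (intro j; unfold cx; apply Rinv_0_lt_compat; pose proof (hxn j); lra).
    assert (cxle : forall j, cx j <= / sqrt eps0) by (intro j; unfold cx; apply Rinv_le_contravar; auto).
    set (xs := fun j => hscal (RC (cx j)) (x (N0 + j)%nat)).
    assert (xs1 : forall j, hnorm (xs j) = 1).
    { intro j. unfold xs. rewrite hnorm_scal. rewrite Rabs_pos_eq by (pose proof (cxp j); lra).
      unfold cx. field. pose proof (hxn j). lra. }
    assert (xsnz : forall j, xs j <> hzero).
    { intros j ee. pose proof (xs1 j) as h. rewrite ee, hnorm_zero in h. lra. }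
    assert (xsDL : forall j, DL (xs j)).
    { intro j. destruct (hk (N0 + j)%nat) as [_ [dx _]]. unfold xs. apply sub_scal; auto. }
    assert (MU : forall j, exists m, is_mu2 A L (xs j) m).
    { intro j. apply (mu2_exists H DA DL A L P hAlin Asym hDL hLlin hDLA hLDLA hPsym hDLP hLP hLinj); auto. }
    apply choice in MU. destruct MU as [mus hmus].
    assert (musle : forall j, mus j <= mu (N0 + j)%nat).
    { intro j. destruct (hmus j) as [hf _]. apply (mubd (N0 + j)%nat (RC (cx j))). exact hf. }
    destruct (liminf_exists mus) as [yl hyl].
    destruct hinf as [hinf1 _].
    assert (my : Rbar_le m2' yl).
    { apply hinf1. exists xs, mus. split; [|split; auto].
      - intro j. split; [auto|split; [auto|split; [auto|apply hmus]]].
      - intros psi eps heps.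
        assert (q : eps * sqrt eps0 > 0) by nra.
        destruct (WX psi _ q) as [K hK]. exists K. intros j hj.
        unfold R_dist. rewrite Rminus_0_r. rewrite Rabs_pos_eq by apply Cmod_nonneg.
        unfold xs. rewrite hip_scal_l, Cmod_scal. rewrite Rabs_pos_eq by (pose proof (cxp j); lra).
        pose proof (hK (N0 + j)%nat ltac:(lia)) as hk2.
        pose proof (cxle j). pose proof (cxp j). pose proof (Cmod_nonneg (hip (x (N0 + j)%nat) psi)).
        assert (cx j * Cmod (hip (x (N0 + j)%nat) psi) <= / sqrt eps0 * Cmod (hip (x (N0 + j)%nat) psi))
          by (apply Rmult_le_compat_r; lra).
        assert (h3 : / sqrt eps0 * Cmod (hip (x (N0 + j)%nat) psi) < / sqrt eps0 * (eps * sqrt eps0)).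
        { apply Rmult_lt_compat_l; auto. apply Rinv_0_lt_compat; auto. }
        replace (/ sqrt eps0 * (eps * sqrt eps0)) with eps in h3 by (field; lra). lra. }
    assert (yle : forall dl, dl > 0 -> Rbar_le yl (Fin (lam + dl))).
    { intros dl hdl. apply (liminf_le mus); auto. intros J.
      assert (q : dl / ga > 0) by (apply Rdiv_lt_0_compat; lra).
      destruct (small_inv _ q) as [J2 hJ2]. exists (Nat.max J J2). split; [lia|].
      pose proof (musle (Nat.max J J2)). pose proof (mub (N0 + Nat.max J J2)%nat).
      pose proof (hJ2 (N0 + Nat.max J J2)%nat ltac:(lia)) as hh.
      unfold e in H1. pose proof (pos_INR (N0 + Nat.max J J2)%nat).
      apply (Rmult_lt_compat_l ga) in hh; auto.
      replace (ga * (dl / ga)) with dl in hh by (field; lra).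
      unfold Rdiv in H1. lra. }
    destruct m2' as [r| |].
    + destruct hlm as [hl1 hl2]. simpl in hl1.
      assert (lr : lam < r) by (destruct hl1; auto; subst; congruence).
      pose proof (yle ((r - lam) / 2) ltac:(lra)) as hy.
      pose proof (Rbar_le_trans _ _ _ my hy). simpl in H0. lra.
    + pose proof (yle 1 ltac:(lra)) as hy.
      pose proof (Rbar_le_trans _ _ _ my hy). simpl in H0. exact H0.
    + destruct hlm as [hl1 _]. simpl in hl1. exact hl1.
Qed.
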